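(* Let $T>0$, and let $q\in H^1([0,T],\mathbb R^{3N})\cap C^0$ be collision-free on $(0,T)$, solving the rotating-frame equations there for some $\omega_0$, and having an $\mathbf I$-cluster collision at $t=0$ for some $\mathbf I\subset\mathbf N$ with $|\mathbf I|\ge2$. Assume $q$ lies in a plane parallel to the $xy$-plane, i.e. each $z_i$ is constant on $[0,T]$. Let $\tau=(\tau_i)_{i\in\mathbf N}\in\{0,\pm1\}^N$ satisfy $\tau_{i_0}\ne\tau_{i_1}$ for some $i_0\neq i_1$ in $\mathbf I$, and $\tau_i=0$ for all $i\notin\mathbf I$. Then for every sufficiently small $\varepsilon>0$ there are $0<\delta_1<\delta_2$ (small, depending on $\varepsilon$) and $f\in H^1([0,T],\mathbb R)$ with $f=1$ on $[0,\delta_1]$, $f=0$ on $[\delta_2,T]$, and $f$ decreasing on $[\delta_1,\delta_2]$, with the following property. For every $\omega\in\mathbb R$, the path $q^\varepsilon_i(t)=q_i(t)+\varepsilon f(t)\tau_i\mathbf e_3$ ($i\in\mathbf N$, $\mathbf e_3=(0,0,1)$) satisfies $\mathcal A_\omega(q^\varepsilon;T)<\mathcal A_\omega(q;T)$.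
   Context: Fix $N\ge2$ and $\mathbf N=\{0,\dots,N-1\}$. Consider unit masses with positions $q_i=(x_i,y_i,z_i)=(\zeta_i,z_i)$, where $\zeta_i=x_i+\mathrm iy_i$. - Potential: $U(q)=\sum_{i<l}1/|q_i-q_l|$. - Rotating-frame action: $\mathcal A_\omega(q;T)=\int_0^T\big(\tfrac12\sum_i(|\dot\zeta_i+\mathrm i\omega\zeta_i|^2+\dot z_i^2)+U(q)\big)dt$. - Rotating-frame equations: $q$ solves them on an open interval if there it is $C^2$, collision-free, and $(e^{\mathrm i\omega t}\zeta_i,z_i)_i$ solves Newton's equations $\ddot q_i=-\sum_{l\ne i}(q_i-q_l)/|q_i-q_l|^3$. - Cluster collisions: $q$ has an $\mathbf I$-cluster collision at $t_0$ if all $q_i(t_0)$, $i\in\mathbf I$, coincide and differ from all $q_l(t_0)$, $l\notin\mathbf I$. *)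

(* Defs.v *)
From Stdlib Require Import Reals Lra.
Open Scope R_scope.

(* A configuration of N bodies is given by coordinate functions
   x i, y i, z i : R -> R for i < N  (zeta_i = x_i + i y_i). *)

Fixpoint sumN (n : nat) (g : nat -> R) : R :=
  match n with O => 0 | S m => sumN m g + g m end.

Definition dist3 (x y z : nat -> R -> R) (i l : nat) (t : R) : R :=
  sqrt ((x i t - x l t)^2 + (y i t - y l t)^2 + (z i t - z l t)^2).

Definition coincide (x y z : nat -> R -> R) (i l : nat) (t : R) : Prop :=
  x i t = x l t /\ y i t = y l t /\ z i t = z l t.

Definition collision_free (N : nat) (x y z : nat -> R -> R) (t : R) : Prop :=
  forall i l, (i < N)%nat -> (l < N)%nat -> i <> l -> ~ coincide x y z i l t.

Definition U (N : nat) (x y z : nat -> R -> R) (t : R) : R :=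
  sumN N (fun i => sumN i (fun l => 1 / dist3 x y z i l t)).

Definition cont_on (a b : R) (g : R -> R) : Prop :=
  forall t, a <= t <= b -> forall e, e > 0 -> exists d, d > 0 /\
    forall s, a <= s <= b -> Rabs (s - t) < d -> Rabs (g s - g t) < e.

Definition C2on (a b : R) (g : R -> R) : Prop :=
  exists g1 g2 : R -> R, forall t, a < t < b ->
    derivable_pt_lim g t (g1 t) /\ derivable_pt_lim g1 t (g2 t) /\ continuity_pt g2 t.

(* inertial-frame coordinates  (e^{i w t} zeta_i, z_i) *)
Definition rotX (w : R) (x y : nat -> R -> R) (i : nat) (t : R) : R :=
  cos (w * t) * x i t - sin (w * t) * y i t.
Definition rotY (w : R) (x y : nat -> R -> R) (i : nat) (t : R) : R :=
  sin (w * t) * x i t + cos (w * t) * y i t.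

Definition force (N : nat) (X Y Z : nat -> R -> R) (c : nat -> R -> R)
  (i : nat) (t : R) : R :=
  - sumN N (fun l => if Nat.eqb l i then 0
                     else (c i t - c l t) / (dist3 X Y Z i l t) ^ 3).

Definition solves_rot (N : nat) (w a b : R) (x y z : nat -> R -> R) : Prop :=
  (forall t, a < t < b -> collision_free N x y z t) /\
  forall i, (i < N)%nat ->
    C2on a b (x i) /\ C2on a b (y i) /\ C2on a b (z i) /\
    exists VX AX VY AY VZ AZ : R -> R, forall t, a < t < b ->
      derivable_pt_lim (rotX w x y i) t (VX t) /\ derivable_pt_lim VX t (AX t) /\
      derivable_pt_lim (rotY w x y i) t (VY t) /\ derivable_pt_lim VY t (AY t) /\
      derivable_pt_lim (z i) t (VZ t) /\ derivable_pt_lim VZ t (AZ t) /\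
      AX t = force N (rotX w x y) (rotY w x y) z (rotX w x y) i t /\
      AY t = force N (rotX w x y) (rotY w x y) z (rotY w x y) i t /\
      AZ t = force N (rotX w x y) (rotY w x y) z z i t.

Definition cluster_collision (N : nat) (I : nat -> Prop) (x y z : nat -> R -> R)
  (t0 : R) : Prop :=
  (forall i l, I i -> I l -> coincide x y z i l t0) /\
  (forall i l, I i -> (l < N)%nat -> ~ I l -> ~ coincide x y z i l t0).

(* Lower (Darboux-type) integral over [a,b] of a nonnegative, possibly
   +oo-valued, integrand g.  [Ge t c] means "c <= g t". *)
Definition lower_integral_is (a b : R) (Ge : R -> R -> Prop) (v : R) : Prop :=
  is_lub (fun r => exists phi : StepFun a b,
            (forall t, a < t < b -> Ge t (phi t)) /\ r = RiemannInt_SF phi) v.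

(* "c <= L_w(q)(t)": the rotating-frame Lagrangian
   1/2 sum_i (|zeta_i' + i w zeta_i|^2 + z_i'^2) + U(q), equal to +oo at
   collisions (no constraint); where q is not differentiable (finitely many
   points in our use) no constraint is imposed either. *)
Definition Lag_ge (N : nat) (w : R) (x y z : nat -> R -> R) (t c : R) : Prop :=
  ~ collision_free N x y z t \/
  forall dx dy dz : nat -> R,
    (forall i, (i < N)%nat -> derivable_pt_lim (x i) t (dx i) /\
        derivable_pt_lim (y i) t (dy i) /\ derivable_pt_lim (z i) t (dz i)) ->
    c <= / 2 * sumN N (fun i => (dx i - w * y i t)^2 + (dy i + w * x i t)^2 + (dz i)^2)
         + U N x y z t.

Definition action_is (N : nat) (w T : R) (x y z : nat -> R -> R) (v : R) : Prop :=
  lower_integral_is 0 T (Lag_ge N w x y z) v.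

(* A_w(q1;T) < A_w(q2;T) in [0,+oo]: A_w(q1;T) is finite and, if A_w(q2;T)
   is finite, strictly smaller. *)
Definition action_lt (N : nat) (w T : R) (x1 y1 z1 x2 y2 z2 : nat -> R -> R) : Prop :=
  exists a, action_is N w T x1 y1 z1 a /\
    forall b, action_is N w T x2 y2 z2 b -> a < b.

(* q in H^1([0,T]) : continuous on [0,T] and the kinetic energy
   int_0^T |q'|^2 is finite. *)
Definition H1_path (N : nat) (T : R) (x y z : nat -> R -> R) : Prop :=
  (forall i, (i < N)%nat -> cont_on 0 T (x i) /\ cont_on 0 T (y i) /\ cont_on 0 T (z i)) /\
  exists v, lower_integral_is 0 T (fun t c =>
    forall dx dy dz : nat -> R,
    (forall i, (i < N)%nat -> derivable_pt_lim (x i) t (dx i) /\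
        derivable_pt_lim (y i) t (dy i) /\ derivable_pt_lim (z i) t (dz i)) ->
    c <= sumN N (fun i => (dx i)^2 + (dy i)^2 + (dz i)^2)) v.

(* Main.v *)
Require Import Defs.
From Stdlib Require Import Reals Lra Lia List ZArith FunctionalExtensionality IndefiniteDescription.
Import ListNotations.
Open Scope R_scope.

Lemma sumN_ext n f g : (forall i, (i < n)%nat -> f i = g i) -> sumN n f = sumN n g.
Proof. induction n; simpl; intros H; auto. rewrite IHn by (intros; apply H; lia). rewrite H by lia. auto. Qed.

Lemma sumN_plus n f g : sumN n (fun i => f i + g i) = sumN n f + sumN n g.
Proof. induction n; simpl; [lra|]. rewrite IHn; lra. Qed.

Lemma sumN_scal n c f : sumN n (fun i => c * f i) = c * sumN n f.
Proof. induction n; simpl; [lra|]. rewrite IHn; lra. Qed.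

Lemma sumN_opp n f : sumN n (fun i => - f i) = - sumN n f.
Proof. induction n; simpl; [lra|]. rewrite IHn; lra. Qed.

Lemma sumN_zero n : sumN n (fun _ => 0) = 0.
Proof. induction n; simpl; [lra|]. rewrite IHn; lra. Qed.

Lemma sumN_le n f g : (forall i, (i < n)%nat -> f i <= g i) -> sumN n f <= sumN n g.
Proof. induction n; simpl; intros H; [lra|]. assert (f n <= g n) by (apply H; lia).
 assert (sumN n f <= sumN n g) by (apply IHn; intros; apply H; lia). lra. Qed.

Lemma sumN_nonneg n f : (forall i, (i < n)%nat -> 0 <= f i) -> 0 <= sumN n f.
Proof. intros H. rewrite <- (sumN_zero n). apply sumN_le. auto. Qed.

Lemma sumN_ge_term n f k : (forall i, (i < n)%nat -> 0 <= f i) -> (k < n)%nat -> f k <= sumN n f.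
Proof. induction n; simpl; intros H Hk; [lia|].
 destruct (Nat.eq_dec k n).
 - subst. assert (0 <= sumN n f) by (apply sumN_nonneg; intros; apply H; lia). lra.
 - assert (f k <= sumN n f) by (apply IHn; [intros; apply H; lia| lia]).
   assert (0 <= f n) by (apply H; lia). lra. Qed.

Lemma sumN_ge_two n f k l : (forall i, (i < n)%nat -> 0 <= f i) -> (k < n)%nat -> (l < n)%nat -> k <> l ->
  f k + f l <= sumN n f.
Proof. induction n; simpl; intros H Hk Hl Hkl; [lia|].
 assert (Hn : 0 <= f n) by (apply H; lia).
 assert (H' : forall i, (i < n)%nat -> 0 <= f i) by (intros; apply H; lia).
 destruct (Nat.eq_dec k n); destruct (Nat.eq_dec l n); subst; try lia.
 - assert (f l <= sumN n f) by (apply sumN_ge_term; auto; lia). lra.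
 - assert (f k <= sumN n f) by (apply sumN_ge_term; auto; lia). lra.
 - assert (f k + f l <= sumN n f) by (apply IHn; auto; lia). lra. Qed.

Lemma sumN_zero_each n f : (forall i, (i < n)%nat -> 0 <= f i) -> sumN n f = 0 ->
  forall k, (k < n)%nat -> f k = 0.
Proof. intros H H0 k Hk. assert (f k <= sumN n f) by (apply sumN_ge_term; auto). specialize (H k Hk). lra. Qed.

Lemma sumN_deriv n (F : nat -> R -> R) (F' : nat -> R) t :
  (forall i, (i < n)%nat -> derivable_pt_lim (F i) t (F' i)) ->
  derivable_pt_lim (fun s => sumN n (fun i => F i s)) t (sumN n F').
Proof. induction n; simpl; intros H.
 - apply (derivable_pt_lim_ext (fct_cte 0)). { intros; reflexivity. } apply derivable_pt_lim_const.
 - apply (derivable_pt_lim_ext ((fun s => sumN n (fun i => F i s)) + F n)%F).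
   { intros; reflexivity. } apply derivable_pt_lim_plus. apply IHn; intros; apply H; lia. apply H; lia. Qed.

Lemma sumN_sym n (g : nat -> nat -> R) :
  sumN n (fun i => sumN n (fun l => if Nat.eqb l i then 0 else g i l)) =
  sumN n (fun i => sumN i (fun l => g i l + g l i)).
Proof. induction n; simpl; [lra|].
 rewrite Nat.eqb_refl.
 rewrite (sumN_ext n (fun i => sumN n (fun l => if Nat.eqb l i then 0 else g i l) + (if Nat.eqb n i then 0 else g i n))
   (fun i => sumN n (fun l => if Nat.eqb l i then 0 else g i l) + g i n)).
 2:{ intros i Hi. destruct (Nat.eqb_spec n i); [lia|]. reflexivity. }
 rewrite sumN_plus, IHn.
 rewrite (sumN_ext n (fun l => if Nat.eqb l n then 0 else g n l) (fun l => g n l)).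
 2:{ intros l Hl. destruct (Nat.eqb_spec l n); [lia|]. reflexivity. }
 rewrite sumN_plus. assert (E: sumN n (fun l => g n l) = sumN n (g n)) by reflexivity. rewrite E. lra. Qed.


Lemma SF_const_open a b c (g : R -> R) : a <= b -> (forall x, a < x < b -> g x = c) -> IsStepFun g a b.
Proof. intros Hab H. exists (a :: b :: nil). exists (c :: nil).
 unfold adapted_couple. repeat split.
 - unfold RList.ordered_Rlist. intros i Hi. simpl in Hi. destruct i; [simpl; lra| lia].
 - simpl. unfold Rmin. destruct (Rle_dec a b); lra.
 - simpl. unfold Rmax. destruct (Rle_dec a b); lra.
 - intros i Hi. simpl in Hi. destruct i; [|lia]. simpl. unfold constant_D_eq, open_interval. intros x Hx. apply H; auto.
Qed.

Lemma SF_transfer f g a b : IsStepFun f a b -> (forall x, Rmin a b <= x <= Rmax a b -> f x = g x) -> IsStepFun g a b.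
Proof. intros [l [lf [Hord [H0 [H1 [Hlen Hc]]]]]] E. exists l. exists lf. unfold adapted_couple. repeat split; auto.
 intros i Hi. unfold constant_D_eq, open_interval in *. intros x Hx. rewrite <- E. apply Hc; auto.
 rewrite RList.RList_P6 in Hord.
 assert (RList.pos_Rl l 0 <= RList.pos_Rl l i) by (apply Hord; lia).
 assert (RList.pos_Rl l (S i) <= RList.pos_Rl l (pred (length l))) by (apply Hord; lia).
 lra. Qed.

Lemma SF_int_le a b (f g : StepFun a b) : a <= b -> (forall x, a < x < b -> f x <= g x) -> RiemannInt_SF f <= RiemannInt_SF g.
Proof. intros; apply StepFun_P37; auto. Qed.

Lemma SF_int_eq a b (f g : StepFun a b) : a <= b -> (forall x, a < x < b -> f x = g x) -> RiemannInt_SF f = RiemannInt_SF g.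
Proof. intros Hab H. apply Rle_antisym; apply StepFun_P37; auto; intros x Hx; rewrite H; auto; lra. Qed.

Lemma SF_const_int a b c (f : StepFun a b) : a <= b -> (forall x, a < x < b -> f x = c) -> RiemannInt_SF f = c * (b - a).
Proof. intros Hab H. rewrite <- (StepFun_P18 a b c). apply SF_int_eq; auto. Qed.

Lemma SF_lin a b (f g : StepFun a b) (al be : R) :
  {h : StepFun a b | (forall x, h x = al * f x + be * g x) /\ RiemannInt_SF h = al * RiemannInt_SF f + be * RiemannInt_SF g}.
Proof.
 set (h1 := mkStepFun (StepFun_P28 al (mkStepFun (StepFun_P4 a b 0)) f)).
 exists (mkStepFun (StepFun_P28 be h1 g)). split.
 - intros x. simpl. unfold fct_cte. ring.
 - rewrite StepFun_P30. unfold h1. rewrite StepFun_P30. rewrite StepFun_P18. ring. Qed.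

Definition ext0 (c d : R) (phi : R -> R) (x : R) : R :=
  if Rle_dec c x then if Rle_dec x d then phi x else 0 else 0.

Lemma SF_ext a b c d (phi : StepFun c d) : a <= c -> c <= d -> d <= b ->
  {F : StepFun a b | (forall x, F x = ext0 c d phi x) /\ RiemannInt_SF F = RiemannInt_SF phi}.
Proof. intros Hac Hcd Hdb.
 assert (p1 : IsStepFun (ext0 c d phi) a c).
 { apply (SF_const_open a c 0); auto. intros x Hx. unfold ext0. destruct (Rle_dec c x); [lra|auto]. }
 assert (p2 : IsStepFun (ext0 c d phi) c d).
 { apply (SF_transfer phi). apply (pre phi). intros x Hx. unfold Rmin, Rmax in Hx. destruct (Rle_dec c d); [|lra].
   unfold ext0. destruct (Rle_dec c x); [|lra]. destruct (Rle_dec x d); [auto|lra]. }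
 assert (p3 : IsStepFun (ext0 c d phi) d b).
 { apply (SF_const_open d b 0); auto. intros x Hx. unfold ext0. destruct (Rle_dec c x); [|auto]. destruct (Rle_dec x d); [lra|auto]. }
 assert (p23 : IsStepFun (ext0 c d phi) c b) by (exact (StepFun_P46 p2 p3)).
 assert (p : IsStepFun (ext0 c d phi) a b) by (exact (StepFun_P46 p1 p23)).
 exists (mkStepFun p). split; [intros; reflexivity|].
 rewrite <- (@StepFun_P43 _ a c b p1 p23 p). rewrite <- (@StepFun_P43 _ c d b p2 p3 p23).
 rewrite (SF_const_int a c 0 (mkStepFun p1)); auto. 2:{ intros x Hx; simpl; unfold ext0; destruct (Rle_dec c x); [lra|auto]. }
 rewrite (SF_const_int d b 0 (mkStepFun p3)); auto. 2:{ intros x Hx; simpl; unfold ext0; destruct (Rle_dec c x); [|auto]. destruct (Rle_dec x d); [lra|auto]. }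
 rewrite (SF_int_eq c d (mkStepFun p2) phi); auto. ring.
 intros x Hx; simpl; unfold ext0; destruct (Rle_dec c x); [|lra]. destruct (Rle_dec x d); [auto|lra]. Qed.

Definition chi (c d x : R) : R := if Rle_dec c x then if Rle_dec x d then 1 else 0 else 0.

Lemma SF_chi a b c d : a <= c -> c <= d -> d <= b ->
  {F : StepFun a b | (forall x, F x = chi c d x) /\ RiemannInt_SF F = d - c}.
Proof. intros. destruct (SF_ext a b c d (mkStepFun (StepFun_P4 c d 1))) as [F [HF HI]]; auto.
 exists F. split. intros x. rewrite HF. unfold ext0, chi. simpl. unfold fct_cte. reflexivity.
 rewrite HI, StepFun_P18. ring. Qed.

Lemma Rabs_le_between x y : Rabs x <= y -> -y <= x <= y.
Proof. unfold Rabs; destruct (Rcase_abs x); intros; lra. Qed.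
Lemma Rabs_lt_between x y : Rabs x < y -> -y < x < y.
Proof. unfold Rabs; destruct (Rcase_abs x); intros; lra. Qed.

Lemma riemann_lower f a b (pr : Riemann_integrable f a b) : a <= b -> forall eta, 0 < eta ->
  exists phi : StepFun a b, (forall t, a <= t <= b -> phi t <= f t) /\ RiemannInt pr - eta <= RiemannInt_SF phi.
Proof. intros Hab eta Heta. unfold RiemannInt. destruct (RiemannInt_exists pr RinvN RinvN_cv) as [I HI].
 destruct (HI (eta/2)) as [N1 HN1]; [lra|].
 destruct (archimed (2/eta)) as [Ha _].
 assert (HZ: (0 <= up (2/eta))%Z). { apply le_IZR. assert (0 < 2/eta) by (apply Rdiv_lt_0_compat; lra). lra. }
 set (n := (N1 + Z.to_nat (up (2/eta)))%nat).
 destruct (phi_sequence_prop RinvN pr n) as [psi [Hpsi Hint]].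
 destruct (SF_lin a b (phi_sequence RinvN pr n) psi 1 (-1)) as [h [Hh Hhi]].
 exists h. split.
 - intros t Ht. rewrite Hh. assert (Rmin a b <= t <= Rmax a b) by (unfold Rmin, Rmax; destruct (Rle_dec a b); lra).
   specialize (Hpsi t H). apply Rabs_le_between in Hpsi. lra.
 - rewrite Hhi. specialize (HN1 n ltac:(unfold n; lia)). unfold R_dist in HN1. apply Rabs_lt_between in HN1.
   apply Rabs_lt_between in Hint. unfold RinvN in Hint. simpl in Hint.
   assert (/ (INR n + 1) < eta/2).
   { assert (INR n >= 2/eta). { unfold n. rewrite plus_INR, (INR_IZR_INZ (Z.to_nat _)), Z2Nat.id by auto. pose proof (pos_INR N1). lra. }
     assert (0 < 2/eta) by (apply Rdiv_lt_0_compat; lra).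
     apply (Rmult_lt_reg_l (INR n + 1)). lra. rewrite Rinv_r by lra.
     replace (2/eta) with (2 * /eta) in H by (unfold Rdiv; auto).
     assert (INR n * eta >= 2). { replace 2 with (2 * /eta * eta) by (field; lra). apply Rmult_ge_compat_r; lra. }
     nra. }
   lra. Qed.


Lemma cont_ext f g x : continuity_pt f x -> (forall y, f y = g y) -> continuity_pt g x.
Proof. intros H E. replace g with f; auto. apply functional_extensionality; auto. Qed.

Lemma ftc_loc G g a b (pr : Riemann_integrable g a b) : a < b ->
  (forall x, a <= x <= b -> derivable_pt_lim G x (g x)) ->
  (forall x, a <= x <= b -> continuity_pt g x) -> RiemannInt pr = G b - G a.
Proof. intros Hab HD HC. assert (h : a <= b) by lra.
 rewrite (RiemannInt_P20 h (FTC_P1 h HC) pr).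
 set (P := primitive h (FTC_P1 h HC)).
 destruct (MVT_cor2 (fun x => P x - G x) (fun _ => 0) a b Hab) as [c [Hc _]].
 { intros c Hc. replace 0 with (g c - g c) by ring. apply (derivable_pt_lim_minus P G).
   apply RiemannInt_P28; auto. apply HD; auto. }
 lra. Qed.

Lemma cs_one G g a b (pr : Riemann_integrable (fun x => g x ^ 2) a b) : a < b ->
  (forall x, a <= x <= b -> derivable_pt_lim G x (g x)) ->
  (forall x, a <= x <= b -> continuity_pt g x) -> (G b - G a) ^ 2 <= (b - a) * RiemannInt pr.
Proof. intros Hab HD HC. assert (h : a <= b) by lra.
 set (m := (G b - G a) / (b - a)).
 assert (Cg2 : forall x, a <= x <= b -> continuity_pt (fun x => g x ^ 2) x).
 { intros x Hx. apply (cont_ext (g * g)%F). apply continuity_pt_mult; auto. intros; unfold mult_fct; simpl; ring. }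
 assert (Cq : forall x, a <= x <= b -> continuity_pt (fun x => g x ^ 2 + (-2*m) * g x) x).
 { intros x Hx. apply (cont_ext ((fun x => (g x ^ 2)%R) + mult_real_fct (-2*m) g)%F).
   apply continuity_pt_plus; auto. apply continuity_pt_scal; auto. intros; unfold plus_fct, mult_real_fct; simpl; ring. }
 assert (Cr : forall x, a <= x <= b -> continuity_pt (fun x => (g x ^ 2 + (-2*m) * g x) + m^2 * fct_cte 1 x) x).
 { intros x Hx. apply (cont_ext ((fun x => (g x ^ 2 + (-2*m) * g x)%R) + mult_real_fct (m^2) (fct_cte 1))%F).
   apply continuity_pt_plus; auto. apply continuity_pt_scal; auto. apply continuity_pt_const. intros u v; reflexivity.
   intros; unfold plus_fct, mult_real_fct; simpl; ring. }
 set (p1 := continuity_implies_RiemannInt h HC).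
 set (pq := continuity_implies_RiemannInt h Cq).
 set (pr' := continuity_implies_RiemannInt h Cr).
 assert (E1 : RiemannInt pq = RiemannInt pr + (-2*m) * RiemannInt p1) by apply RiemannInt_P13.
 assert (E2 : RiemannInt pr' = RiemannInt pq + m^2 * RiemannInt (RiemannInt_P14 a b 1)) by apply RiemannInt_P13.
 rewrite RiemannInt_P15 in E2. rewrite (ftc_loc G g a b p1) in E1; auto.
 assert (P0 : RiemannInt (RiemannInt_P14 a b 0) <= RiemannInt pr').
 { apply RiemannInt_P19; auto. intros x Hx. unfold fct_cte. cbv beta. pose proof (pow2_ge_0 (g x - m)). lra. }
 rewrite RiemannInt_P15 in P0.
 assert (Hm : G b - G a = m * (b - a)) by (unfold m; field; lra).
 rewrite Hm in *. nra. Qed.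


Lemma le_eps x v : (forall eta, 0 < eta -> x - eta <= v) -> x <= v.
Proof. intros H. destruct (Rle_dec x v); auto. specialize (H ((x - v)/2)). lra. Qed.

Lemma lower_link (T a b v : R) (Ge : R -> R -> Prop) (h : R -> R) (pr : Riemann_integrable h a b) :
  0 <= a -> a <= b -> b <= T ->
  lower_integral_is 0 T Ge v ->
  (forall t, 0 < t < T -> Ge t 0) ->
  (forall t c, a <= t <= b -> 0 < t < T -> c <= h t -> Ge t (/2 * c)) ->
  RiemannInt pr <= 2 * v.
Proof. intros Ha Hab Hb [Hub _] H0 H1.
 assert (RiemannInt pr / 2 <= v); [|lra].
 apply le_eps. intros eta Heta.
 destruct (riemann_lower h a b pr Hab (2*eta)) as [phi [Hphi Hint]]; [lra|].
 destruct (SF_lin a b phi phi (/2) 0) as [phi2 [Hp2 Hi2]].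
 destruct (SF_ext 0 T a b phi2) as [F [HF HFi]]; auto.
 assert (RiemannInt_SF F <= v).
 { apply Hub. exists F. split; auto. intros t Ht. rewrite HF. unfold ext0.
   destruct (Rle_dec a t); [|apply H0; auto]. destruct (Rle_dec t b); [|apply H0; auto].
   rewrite Hp2. replace (/2 * phi t + 0 * phi t) with (/2 * phi t) by ring. apply H1; auto. }
 lra. Qed.

Definition clamp (T t : R) := Rmax 0 (Rmin T t).

Lemma clamp_in T t : 0 <= T -> 0 <= clamp T t <= T.
Proof. intros. unfold clamp, Rmax, Rmin. destruct (Rle_dec T t); destruct (Rle_dec 0 _); lra. Qed.

Lemma clamp_id T t : 0 <= t <= T -> clamp T t = t.
Proof. intros. unfold clamp, Rmax, Rmin. destruct (Rle_dec T t); destruct (Rle_dec 0 _); lra. Qed.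

Lemma clamp_lip T s t : 0 <= T -> Rabs (clamp T s - clamp T t) <= Rabs (s - t).
Proof. intros. unfold clamp, Rmax, Rmin.
 destruct (Rle_dec T s); destruct (Rle_dec T t); repeat (destruct (Rle_dec 0 _)); unfold Rabs; repeat destruct (Rcase_abs _); lra. Qed.

Lemma cont_on_clamp T g : 0 <= T -> cont_on 0 T g -> forall t, continuity_pt (fun s => g (clamp T s)) t.
Proof. intros HT Hc t. unfold continuity_pt, continue_in, limit1_in, limit_in. simpl. unfold R_dist.
 intros e He. destruct (Hc (clamp T t) (clamp_in T t HT) e He) as [d [Hd Hd']].
 exists d. split; auto. intros s [_ Hs]. apply Hd'. apply clamp_in; auto.
 pose proof (clamp_lip T s t HT). lra. Qed.

Lemma cont_sumN n (F : nat -> R -> R) t : (forall i, (i < n)%nat -> continuity_pt (F i) t) ->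
  continuity_pt (fun s => sumN n (fun i => F i s)) t.
Proof. induction n; simpl; intros H.
 - apply continuity_pt_const. intros u v; reflexivity.
 - apply (cont_ext ((fun s => sumN n (fun i => F i s)) + F n)%F). apply continuity_pt_plus. apply IHn; intros; apply H; lia. apply H; lia.
   intros; reflexivity. Qed.

Lemma cont_bounded (g : R -> R) T : 0 <= T -> (forall t, continuity_pt g t) -> exists M, forall t, 0 <= t <= T -> g t <= M.
Proof. intros HT Hc. destruct (continuity_ab_maj g 0 T HT) as [Mx [HM _]]. intros; apply Hc. exists (g Mx). auto. Qed.

Lemma deriv_cont_on g g' T : (forall t, derivable_pt_lim g t (g' t)) -> cont_on 0 T g.
Proof. intros H t _ e He. assert (continuity_pt g t). { apply derivable_continuous_pt. exists (g' t). apply H. }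
 unfold continuity_pt, continue_in, limit1_in, limit_in in H0. simpl in H0. unfold R_dist in H0.
 destruct (H0 e He) as [d [Hd Hd']]. exists d. split; auto. intros s _ Hs.
 destruct (Req_dec s t). subst. rewrite Rminus_diag, Rabs_R0. auto. apply Hd'. split; auto. unfold D_x, no_cond. split; auto. Qed.

From Coquelicot Require Import Coquelicot.
Open Scope R_scope.

Lemma deriv_junction f g h p r l : 0 < r -> (forall s, p - r < s <= p -> f s = g s) -> (forall s, p <= s < p + r -> f s = h s) ->
  derivable_pt_lim g p l -> derivable_pt_lim h p l -> derivable_pt_lim f p l.
Proof. intros Hr Hg Hh Dg Dh eps Heps.
 destruct (Dg eps Heps) as [dg Hdg]. destruct (Dh eps Heps) as [dh Hdh].
 assert (Hd : 0 < Rmin r (Rmin dg dh)). { destruct dg, dh; simpl. repeat apply Rmin_pos; lra. }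
 exists (mkposreal _ Hd). intros hh Hh0 Hhh. simpl in Hhh.
 assert (Hm1 := Rmin_l r (Rmin dg dh)). assert (Hm2 := Rmin_r r (Rmin dg dh)).
 assert (Hm3 := Rmin_l dg dh). assert (Hm4 := Rmin_r dg dh).
 assert (Ha : Rabs hh < r) by lra. apply Rabs_lt_between in Ha.
 destruct (Rle_dec hh 0).
 - rewrite (Hg (p + hh)) by lra. rewrite (Hg p) by lra. apply Hdg; auto. lra.
 - rewrite (Hh (p + hh)) by lra. rewrite (Hh p) by lra. apply Hdh; auto. lra. Qed.

Lemma cont_loc_ext f g a b t : a < t < b -> (forall s, a < s < b -> f s = g s) -> continuity_pt f t -> continuity_pt g t.
Proof. intros Ht E C. unfold continuity_pt, continue_in, limit1_in, limit_in in *. simpl in *. unfold R_dist in *.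
 intros e He. destruct (C e He) as [d [Hd Hd']]. exists (Rmin d (Rmin (t - a) (b - t))). split.
 { repeat apply Rmin_pos; lra. }
 intros s [Hs1 Hs2]. pose proof (Rmin_l d (Rmin (t - a) (b - t))). pose proof (Rmin_r d (Rmin (t - a) (b - t))).
 pose proof (Rmin_l (t - a) (b - t)). pose proof (Rmin_r (t - a) (b - t)).
 assert (Rabs (s - t) < t - a) by lra. assert (Rabs (s - t) < b - t) by lra.
 apply Rabs_lt_between in H3. apply Rabs_lt_between in H4.
 rewrite <- (E s) by lra. rewrite <- (E t) by lra. apply Hd'. split; auto. lra. Qed.

Definition Pc (s : R) := 1 - 3 * s ^ 2 + 2 * s ^ 3.
Definition Pcd (s : R) := -6 * s + 6 * s ^ 2.

Definition fcub (d1 L t : R) : R := if Rle_dec t d1 then 1 else if Rle_dec (d1 + L) t then 0 else Pc ((t - d1) / L).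
Definition fcubd (d1 L t : R) : R := if Rle_dec t d1 then 0 else if Rle_dec (d1 + L) t then 0 else Pcd ((t - d1) / L) / L.

Lemma Pc_deriv d1 L t : L <> 0 -> derivable_pt_lim (fun t => Pc ((t - d1) / L)) t (Pcd ((t - d1) / L) / L).
Proof. intros. unfold Pc, Pcd. apply is_derive_Reals. auto_derive. auto. field. auto. Qed.

Lemma fcub_mid d1 L t : 0 < L -> d1 <= t <= d1 + L -> fcub d1 L t = Pc ((t - d1) / L).
Proof. intros HL Ht. unfold fcub. destruct (Rle_dec t d1).
 - replace t with d1 by lra. unfold Pc. replace ((d1 - d1)/L) with 0 by (field; lra). ring.
 - destruct (Rle_dec (d1 + L) t); auto. replace t with (d1 + L) by lra. unfold Pc. replace ((d1 + L - d1)/L) with 1 by (field; lra). ring. Qed.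

Lemma fcub_deriv d1 L t : 0 < L -> derivable_pt_lim (fcub d1 L) t (fcubd d1 L t).
Proof. intros HL. destruct (Rlt_dec t d1) as [H1|H1].
 - unfold fcubd. destruct (Rle_dec t d1); [|lra].
   apply (derivable_pt_lim_locally_ext (fct_cte 1) _ t (t - 1) d1); [lra| |apply derivable_pt_lim_const].
   intros s Hs. unfold fcub, fct_cte. destruct (Rle_dec s d1); lra.
 - destruct (Rlt_dec (d1 + L) t) as [H2|H2].
   + unfold fcubd. destruct (Rle_dec t d1); [lra|]. destruct (Rle_dec (d1 + L) t); [|lra].
     apply (derivable_pt_lim_locally_ext (fct_cte 0) _ t (d1 + L) (t + 1)); [lra| |apply derivable_pt_lim_const].
     intros s Hs. unfold fcub, fct_cte. destruct (Rle_dec s d1); [lra|]. destruct (Rle_dec (d1 + L) s); lra.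
   + destruct (Req_dec t d1) as [E1|E1].
     * subst t. unfold fcubd. destruct (Rle_dec d1 d1); [|lra].
       apply (deriv_junction _ (fct_cte 1) (fun t => Pc ((t - d1) / L)) d1 L); auto.
       { intros s Hs. unfold fcub, fct_cte. destruct (Rle_dec s d1); lra. }
       { intros s Hs. apply fcub_mid; lra. }
       apply derivable_pt_lim_const.
       replace 0 with (Pcd ((d1 - d1) / L) / L). apply Pc_deriv; lra. unfold Pcd. field; lra.
     * destruct (Req_dec t (d1 + L)) as [E2|E2].
       { subst t. unfold fcubd. destruct (Rle_dec (d1 + L) d1); [lra|]. destruct (Rle_dec (d1 + L) (d1 + L)); [|lra].
         apply (deriv_junction _ (fun t => Pc ((t - d1) / L)) (fct_cte 0) (d1 + L) L); auto.
         { intros s Hs. apply fcub_mid; lra. }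
         { intros s Hs. unfold fcub, fct_cte. destruct (Rle_dec s d1); [lra|]. destruct (Rle_dec (d1 + L) s); lra. }
         replace 0 with (Pcd ((d1 + L - d1) / L) / L). apply Pc_deriv; lra. unfold Pcd. field; lra.
         apply derivable_pt_lim_const. }
       unfold fcubd. destruct (Rle_dec t d1); [lra|]. destruct (Rle_dec (d1 + L) t); [lra|].
       apply (derivable_pt_lim_locally_ext (fun t => Pc ((t - d1) / L)) _ t d1 (d1 + L)); [lra| |apply Pc_deriv; lra].
       intros s Hs. symmetry. apply fcub_mid; lra. Qed.

Lemma fcubd_cont d1 L t : 0 < L -> t <> d1 -> t <> d1 + L -> continuity_pt (fcubd d1 L) t.
Proof. intros HL H1 H2. destruct (Rlt_dec t d1).
 - apply (cont_loc_ext (fct_cte 0) _ (t - 1) d1); [lra| |apply continuity_pt_const; intros u v; reflexivity].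
   intros s Hs. unfold fcubd, fct_cte. destruct (Rle_dec s d1); lra.
 - destruct (Rlt_dec (d1 + L) t).
   + apply (cont_loc_ext (fct_cte 0) _ (d1 + L) (t + 1)); [lra| |apply continuity_pt_const; intros u v; reflexivity].
     intros s Hs. unfold fcubd, fct_cte. destruct (Rle_dec s d1); [lra|]. destruct (Rle_dec (d1 + L) s); lra.
   + apply (cont_loc_ext (fun t => Pcd ((t - d1) / L) / L) _ d1 (d1 + L)); [lra| |].
     intros s Hs. unfold fcubd. destruct (Rle_dec s d1); [lra|]. destruct (Rle_dec (d1 + L) s); lra.
     apply derivable_continuous_pt. exists (((-6 + 12 * ((t - d1)/L)) / L) / L).
     apply is_derive_Reals. unfold Pcd. auto_derive. auto. field. lra. Qed.

Lemma fcubd_bound d1 L t : 0 < L -> fcubd d1 L t ^ 2 <= 9 / (4 * L ^ 2) * chi d1 (d1 + L) t.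
Proof. intros HL. unfold fcubd, chi. destruct (Rle_dec t d1).
 - destruct (Rle_dec d1 t); [destruct (Rle_dec t (d1 + L))|]; try (assert (0 < 9/(4*L^2)) by (apply Rdiv_lt_0_compat; nra)); nra.
 - destruct (Rle_dec (d1 + L) t).
   + destruct (Rle_dec d1 t); [destruct (Rle_dec t (d1 + L))|]; try (assert (0 < 9/(4*L^2)) by (apply Rdiv_lt_0_compat; nra)); nra.
   + destruct (Rle_dec d1 t); [|lra]. destruct (Rle_dec t (d1 + L)); [|lra].
     set (s := (t - d1) / L). assert (0 <= s <= 1).
     { unfold s. split. apply Rdiv_le_0_compat; lra. apply (Rmult_le_reg_r L); auto. unfold Rdiv. rewrite Rmult_assoc, Rinv_l; lra. }
     unfold Pcd. replace (((-6 * s + 6 * s ^ 2) / L) ^ 2) with ((-6 * s + 6 * s ^ 2) ^ 2 / L ^ 2) by (field; lra).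
     replace (9 / (4 * L ^ 2) * 1) with ((9/4) / L ^ 2) by (field; lra).
     unfold Rdiv. apply Rmult_le_compat_r. apply Rlt_le, Rinv_0_lt_compat. nra.
     assert (0 <= s * (1 - s)) by nra. assert (s * (1 - s) <= 1/4) by (pose proof (pow2_ge_0 (s - 1/2)); nra). replace ((-6 * s + 6 * s ^ 2) ^ 2) with (36 * (s * (1 - s)) ^ 2) by ring. nra. Qed.

Lemma Pc_decr s t : 0 <= s -> s < t -> t <= 1 -> Pc t < Pc s.
Proof. intros. unfold Pc.
 assert (0 < 3 * (s + t) - 2 * (s ^ 2 + s * t + t ^ 2)) by nra.
 replace (1 - 3 * s ^ 2 + 2 * s ^ 3 - (1 - 3 * t ^ 2 + 2 * t ^ 3)) with ((t - s) * (3 * (s + t) - 2 * (s ^ 2 + s * t + t ^ 2))) by ring.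
 assert (0 < (t - s) * (3 * (s + t) - 2 * (s ^ 2 + s * t + t ^ 2))) by (apply Rmult_lt_0_compat; lra). lra. Qed.

Lemma fcub_decr d1 L s t : 0 < L -> d1 <= s -> s < t -> t <= d1 + L -> fcub d1 L t < fcub d1 L s.
Proof. intros. rewrite !fcub_mid by lra. apply Pc_decr.
 apply Rdiv_le_0_compat; lra. unfold Rdiv. apply Rmult_lt_compat_r. apply Rinv_0_lt_compat; lra. lra.
 apply (Rmult_le_reg_r L); auto. unfold Rdiv. rewrite Rmult_assoc, Rinv_l; lra. Qed.

Lemma fcub_one d1 L t : t <= d1 -> fcub d1 L t = 1.
Proof. intros. unfold fcub. destruct (Rle_dec t d1); lra. Qed.
Lemma fcub_zero d1 L t : 0 < L -> d1 + L <= t -> fcub d1 L t = 0.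
Proof. intros. unfold fcub. destruct (Rle_dec t d1); [lra|]. destruct (Rle_dec (d1 + L) t); lra. Qed.
Lemma fcubd_zero d1 L t : t <= d1 -> fcubd d1 L t = 0.
Proof. intros. unfold fcubd. destruct (Rle_dec t d1); lra. Qed.


Lemma D_eq f t a b : derivable_pt_lim f t a -> a = b -> derivable_pt_lim f t b.
Proof. intros H ->; auto. Qed.
Lemma D_plus f g t a b : derivable_pt_lim f t a -> derivable_pt_lim g t b -> derivable_pt_lim (fun s => f s + g s) t (a + b).
Proof. intros. apply (derivable_pt_lim_ext (f + g)%F). intros; reflexivity. apply derivable_pt_lim_plus; auto. Qed.
Lemma D_minus f g t a b : derivable_pt_lim f t a -> derivable_pt_lim g t b -> derivable_pt_lim (fun s => f s - g s) t (a - b).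
Proof. intros. apply (derivable_pt_lim_ext (f - g)%F). intros; reflexivity. apply derivable_pt_lim_minus; auto. Qed.
Lemma D_mult f g t a b : derivable_pt_lim f t a -> derivable_pt_lim g t b -> derivable_pt_lim (fun s => f s * g s) t (a * g t + f t * b).
Proof. intros. apply (derivable_pt_lim_ext (f * g)%F). intros; reflexivity. apply derivable_pt_lim_mult; auto. Qed.
Lemma D_const c t : derivable_pt_lim (fun _ => c) t 0.
Proof. apply (derivable_pt_lim_ext (fct_cte c)). intros; reflexivity. apply derivable_pt_lim_const. Qed.
Lemma D_scal c f t a : derivable_pt_lim f t a -> derivable_pt_lim (fun s => c * f s) t (c * a).
Proof. intros. apply (D_eq _ _ (0 * f t + c * a)). apply (D_mult (fun _ => c) f). apply D_const. auto. ring. Qed.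
Lemma D_sq f t a : derivable_pt_lim f t a -> derivable_pt_lim (fun s => f s ^ 2) t (2 * f t * a).
Proof. intros. apply (derivable_pt_lim_ext (fun s => f s * f s)). intros; ring.
 apply (D_eq _ _ (a * f t + f t * a)). apply D_mult; auto. ring. Qed.
Lemma D_comp f g t a b : derivable_pt_lim f t a -> derivable_pt_lim g (f t) b -> derivable_pt_lim (fun s => g (f s)) t (b * a).
Proof. intros. apply (derivable_pt_lim_ext (comp g f)). intros; reflexivity. apply derivable_pt_lim_comp; auto. Qed.

Lemma dist3_sym X Y Z i l t : dist3 X Y Z l i t = dist3 X Y Z i l t.
Proof. unfold dist3. f_equal. ring. Qed.

Lemma dist3_pos X Y Z i l t : 0 < (X i t - X l t) ^ 2 + (Y i t - Y l t) ^ 2 + (Z i t - Z l t) ^ 2 -> 0 < dist3 X Y Z i l t.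
Proof. intros. unfold dist3. apply sqrt_lt_R0. auto. Qed.

Lemma D_invdist X Y Z VX VY VZ i l t :
  0 < (X i t - X l t) ^ 2 + (Y i t - Y l t) ^ 2 + (Z i t - Z l t) ^ 2 ->
  derivable_pt_lim (X i) t (VX i t) -> derivable_pt_lim (X l) t (VX l t) ->
  derivable_pt_lim (Y i) t (VY i t) -> derivable_pt_lim (Y l) t (VY l t) ->
  derivable_pt_lim (Z i) t (VZ i t) -> derivable_pt_lim (Z l) t (VZ l t) ->
  derivable_pt_lim (fun s => 1 / dist3 X Y Z i l s) t
   (- ((X i t - X l t) * (VX i t - VX l t) + (Y i t - Y l t) * (VY i t - VY l t) + (Z i t - Z l t) * (VZ i t - VZ l t))
      / dist3 X Y Z i l t ^ 3).
Proof. intros HS H1 H2 H3 H4 H5 H6.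
 set (S := fun s => (X i s - X l s) ^ 2 + (Y i s - Y l s) ^ 2 + (Z i s - Z l s) ^ 2).
 set (P := (X i t - X l t) * (VX i t - VX l t) + (Y i t - Y l t) * (VY i t - VY l t) + (Z i t - Z l t) * (VZ i t - VZ l t)).
 assert (DS : derivable_pt_lim S t (2 * P)).
 { unfold S. apply (D_eq _ _ (2 * (X i t - X l t) * (VX i t - VX l t) + 2 * (Y i t - Y l t) * (VY i t - VY l t) + 2 * (Z i t - Z l t) * (VZ i t - VZ l t))).
   apply D_plus. apply D_plus. apply (D_sq (fun s => X i s - X l s)). apply D_minus; auto.
   apply (D_sq (fun s => Y i s - Y l s)). apply D_minus; auto. apply (D_sq (fun s => Z i s - Z l s)). apply D_minus; auto.
   unfold P; ring. }
 assert (Hd : 0 < dist3 X Y Z i l t) by (apply dist3_pos; auto).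
 assert (Dd : derivable_pt_lim (fun s => dist3 X Y Z i l s) t (/ (2 * sqrt (S t)) * (2 * P))).
 { apply (derivable_pt_lim_ext (fun s => sqrt (S s))). intros; reflexivity. apply D_comp; auto. apply derivable_pt_lim_sqrt. auto. }
 assert (E : sqrt (S t) = dist3 X Y Z i l t) by reflexivity. rewrite E in Dd.
 apply (derivable_pt_lim_ext ((fct_cte 1) / (fun s => dist3 X Y Z i l s))%F). intros; reflexivity.
 apply (D_eq _ _ ((0 * dist3 X Y Z i l t - (/ (2 * dist3 X Y Z i l t) * (2 * P)) * fct_cte 1 t) / Rsqr (dist3 X Y Z i l t))).
 apply (derivable_pt_lim_div (fct_cte 1) (fun s => dist3 X Y Z i l s)); auto. apply derivable_pt_lim_const. apply Rgt_not_eq; auto.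
 unfold fct_cte, Rsqr, P. field. apply Rgt_not_eq; auto. Qed.

Lemma force_expand N X Y Z VX VY VZ i t :
  VX i t * force N X Y Z X i t + VY i t * force N X Y Z Y i t + VZ i t * force N X Y Z Z i t =
  - sumN N (fun l => if Nat.eqb l i then 0 else
      (VX i t * (X i t - X l t) + VY i t * (Y i t - Y l t) + VZ i t * (Z i t - Z l t)) / dist3 X Y Z i l t ^ 3).
Proof. unfold force.
 rewrite (sumN_ext N (fun l => if Nat.eqb l i then 0 else
      (VX i t * (X i t - X l t) + VY i t * (Y i t - Y l t) + VZ i t * (Z i t - Z l t)) / dist3 X Y Z i l t ^ 3) (fun l => (VX i t * (if Nat.eqb l i then 0 else (X i t - X l t) / dist3 X Y Z i l t ^ 3) +
     VY i t * (if Nat.eqb l i then 0 else (Y i t - Y l t) / dist3 X Y Z i l t ^ 3)) +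
     VZ i t * (if Nat.eqb l i then 0 else (Z i t - Z l t) / dist3 X Y Z i l t ^ 3))).
 - rewrite !sumN_plus, !sumN_scal. ring.
 - intros l Hl. destruct (Nat.eqb l i). ring. unfold Rdiv. ring. Qed.

Definition Pdot (X Y Z VX VY VZ : nat -> R -> R) (i l : nat) (t : R) :=
  (X i t - X l t) * (VX i t - VX l t) + (Y i t - Y l t) * (VY i t - VY l t) + (Z i t - Z l t) * (VZ i t - VZ l t).

Lemma energy_deriv N X Y Z VX VY VZ AX AY AZ t :
 (forall i l, (i<N)%nat -> (l<N)%nat -> i<>l -> 0 < (X i t - X l t)^2 + (Y i t - Y l t)^2 + (Z i t - Z l t)^2) ->
 (forall i, (i<N)%nat -> derivable_pt_lim (X i) t (VX i t) /\ derivable_pt_lim (VX i) t (AX i t) /\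
    derivable_pt_lim (Y i) t (VY i t) /\ derivable_pt_lim (VY i) t (AY i t) /\
    derivable_pt_lim (Z i) t (VZ i t) /\ derivable_pt_lim (VZ i) t (AZ i t) /\
    AX i t = force N X Y Z X i t /\ AY i t = force N X Y Z Y i t /\ AZ i t = force N X Y Z Z i t) ->
 derivable_pt_lim (fun s => /2 * sumN N (fun i => VX i s ^ 2 + VY i s ^ 2 + VZ i s ^ 2) - U N X Y Z s) t 0.
Proof. intros Hpos Hd.
 apply (D_eq _ _ (/2 * sumN N (fun i => 2 * VX i t * AX i t + 2 * VY i t * AY i t + 2 * VZ i t * AZ i t)
     - sumN N (fun i => sumN i (fun l => - Pdot X Y Z VX VY VZ i l t / dist3 X Y Z i l t ^ 3)))).
 - apply D_minus. apply D_scal. apply (sumN_deriv N (fun i s => VX i s ^ 2 + VY i s ^ 2 + VZ i s ^ 2)).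
   + intros i Hi. destruct (Hd i Hi) as (h1 & h2 & h3 & h4 & h5 & h6 & _).
     apply D_plus. apply D_plus. apply D_sq; auto. apply D_sq; auto. apply D_sq; auto.
   + unfold U. apply (sumN_deriv N (fun i s => sumN i (fun l => 1 / dist3 X Y Z i l s))). intros i Hi.
     apply (sumN_deriv i (fun l s => 1 / dist3 X Y Z i l s)). intros l Hl.
     destruct (Hd i Hi) as (h1 & h2 & h3 & h4 & h5 & h6 & _). destruct (Hd l ltac:(lia)) as (k1 & k2 & k3 & k4 & k5 & k6 & _).
     unfold Pdot. apply D_invdist; auto. apply Hpos; lia.
 - rewrite (sumN_ext N (fun i => 2 * VX i t * AX i t + 2 * VY i t * AY i t + 2 * VZ i t * AZ i t)
      (fun i => 2 * - sumN N (fun l => if Nat.eqb l i then 0 else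
      (VX i t * (X i t - X l t) + VY i t * (Y i t - Y l t) + VZ i t * (Z i t - Z l t)) / dist3 X Y Z i l t ^ 3))).
   2:{ intros i Hi. rewrite <- force_expand. destruct (Hd i Hi) as (_ & _ & _ & _ & _ & _ & e1 & e2 & e3). rewrite e1, e2, e3. ring. }
   rewrite sumN_scal, sumN_opp, sumN_sym.
   rewrite (sumN_ext N (fun i => sumN i (fun l => - Pdot X Y Z VX VY VZ i l t / dist3 X Y Z i l t ^ 3))
     (fun i => - sumN i (fun l => (VX i t * (X i t - X l t) + VY i t * (Y i t - Y l t) + VZ i t * (Z i t - Z l t)) / dist3 X Y Z i l t ^ 3 +
          (VX l t * (X l t - X i t) + VY l t * (Y l t - Y i t) + VZ l t * (Z l t - Z i t)) / dist3 X Y Z l i t ^ 3))).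
   2:{ intros i Hi. rewrite <- sumN_opp. apply sumN_ext. intros l Hl. rewrite dist3_sym. unfold Pdot, Rdiv. ring. }
   rewrite sumN_opp. field. Qed.


Lemma rot_id c s a b : c ^ 2 + s ^ 2 = 1 -> (c * a - s * b) ^ 2 + (s * a + c * b) ^ 2 = a ^ 2 + b ^ 2.
Proof. intros H. replace ((c * a - s * b) ^ 2 + (s * a + c * b) ^ 2) with ((c ^ 2 + s ^ 2) * (a ^ 2 + b ^ 2)) by ring. rewrite H. ring. Qed.

Lemma cs1 u : cos u ^ 2 + sin u ^ 2 = 1.
Proof. pose proof (sin2_cos2 u). unfold Rsqr in H. nra. Qed.

Lemma dist_rot w x y z i l t : dist3 (rotX w x y) (rotY w x y) z i l t = dist3 x y z i l t.
Proof. unfold dist3, rotX, rotY. f_equal.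
 replace ((cos (w * t) * x i t - sin (w * t) * y i t - (cos (w * t) * x l t - sin (w * t) * y l t)) ^ 2 +
   (sin (w * t) * x i t + cos (w * t) * y i t - (sin (w * t) * x l t + cos (w * t) * y l t)) ^ 2)
 with ((cos (w * t) * (x i t - x l t) - sin (w * t) * (y i t - y l t)) ^ 2 +
   (sin (w * t) * (x i t - x l t) + cos (w * t) * (y i t - y l t)) ^ 2) by ring.
 rewrite rot_id by apply cs1. ring. Qed.

Lemma U_rot N w x y z t : U N (rotX w x y) (rotY w x y) z t = U N x y z t.
Proof. unfold U. apply sumN_ext; intros; apply sumN_ext; intros. rewrite dist_rot. auto. Qed.

Lemma D_cosw w t : derivable_pt_lim (fun s => cos (w * s)) t (- sin (w * t) * w).
Proof. apply is_derive_Reals. auto_derive. auto. ring. Qed.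
Lemma D_sinw w t : derivable_pt_lim (fun s => sin (w * s)) t (cos (w * t) * w).
Proof. apply is_derive_Reals. auto_derive. auto. ring. Qed.

Lemma D_rotX w x y i t dx dy : derivable_pt_lim (x i) t dx -> derivable_pt_lim (y i) t dy ->
  derivable_pt_lim (rotX w x y i) t (cos (w * t) * (dx - w * y i t) - sin (w * t) * (dy + w * x i t)).
Proof. intros. unfold rotX. apply (D_eq _ _ ((- sin (w*t) * w) * x i t + cos (w*t) * dx - ((cos (w*t) * w) * y i t + sin (w*t) * dy))).
 apply (D_minus (fun s => cos (w * s) * x i s) (fun s => sin (w * s) * y i s)); apply (D_mult (fun s => _ (w * s))); auto using D_cosw, D_sinw. ring. Qed.
Lemma D_rotY w x y i t dx dy : derivable_pt_lim (x i) t dx -> derivable_pt_lim (y i) t dy ->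
  derivable_pt_lim (rotY w x y i) t (sin (w * t) * (dx - w * y i t) + cos (w * t) * (dy + w * x i t)).
Proof. intros. unfold rotY. apply (D_eq _ _ ((cos (w*t) * w) * x i t + sin (w*t) * dx + ((- sin (w*t) * w) * y i t + cos (w*t) * dy))).
 apply (D_plus (fun s => sin (w * s) * x i s) (fun s => cos (w * s) * y i s)); apply (D_mult (fun s => _ (w * s))); auto using D_cosw, D_sinw. ring. Qed.

Lemma rot_kin w t a b : (cos (w * t) * a - sin (w * t) * b) ^ 2 + (sin (w * t) * a + cos (w * t) * b) ^ 2 = a ^ 2 + b ^ 2.
Proof. apply rot_id, cs1. Qed.

Lemma const_deriv0 g T t d : 0 < t < T -> (forall s, 0 <= s <= T -> g s = g 0) -> derivable_pt_lim g t d -> d = 0.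
Proof. intros Ht Hc Hd. apply (uniqueness_limite g t); auto.
 apply (derivable_pt_lim_locally_ext (fun _ => g 0) g t 0 T); auto. intros s Hs. rewrite (Hc s); auto; lra. apply D_const. Qed.

Lemma sq3_pos a b c d e f : ~ (a = b /\ c = d /\ e = f) -> 0 < (a - b) ^ 2 + (c - d) ^ 2 + (e - f) ^ 2.
Proof. intros H. destruct (Req_dec a b); [destruct (Req_dec c d); [destruct (Req_dec e f)|]|].
 - exfalso; auto.
 - assert (0 < (e - f) ^ 2) by (apply pow2_gt_0; lra). pose proof (pow2_ge_0 (a - b)). pose proof (pow2_ge_0 (c - d)). lra.
 - assert (0 < (c - d) ^ 2) by (apply pow2_gt_0; lra). pose proof (pow2_ge_0 (a - b)). pose proof (pow2_ge_0 (e - f)). lra.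
 - assert (0 < (a - b) ^ 2) by (apply pow2_gt_0; lra). pose proof (pow2_ge_0 (e - f)). pose proof (pow2_ge_0 (c - d)). lra. Qed.

Lemma cf_pos N x y z t i l : collision_free N x y z t -> (i < N)%nat -> (l < N)%nat -> i <> l ->
  0 < (x i t - x l t) ^ 2 + (y i t - y l t) ^ 2 + (z i t - z l t) ^ 2.
Proof. intros H Hi Hl Hil. apply sq3_pos. apply H; auto. Qed.

Lemma cf_pos_rot N w x y z t i l : collision_free N x y z t -> (i < N)%nat -> (l < N)%nat -> i <> l ->
  0 < (rotX w x y i t - rotX w x y l t) ^ 2 + (rotY w x y i t - rotY w x y l t) ^ 2 + (z i t - z l t) ^ 2.
Proof. intros. unfold rotX, rotY.
 replace ((cos (w * t) * x i t - sin (w * t) * y i t - (cos (w * t) * x l t - sin (w * t) * y l t)) ^ 2 +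
   (sin (w * t) * x i t + cos (w * t) * y i t - (sin (w * t) * x l t + cos (w * t) * y l t)) ^ 2)
 with ((cos (w * t) * (x i t - x l t) - sin (w * t) * (y i t - y l t)) ^ 2 +
   (sin (w * t) * (x i t - x l t) + cos (w * t) * (y i t - y l t)) ^ 2) by ring.
 rewrite rot_kin. apply cf_pos with N; auto. Qed.

Lemma exists_max n (g : nat -> R) : (0 < n)%nat -> exists k, (k < n)%nat /\ forall l, (l < n)%nat -> g l <= g k.
Proof. induction n; intros Hn; [lia|]. destruct n.
 - exists 0%nat. split; auto. intros l Hl. replace l with 0%nat by lia. lra.
 - destruct (IHn ltac:(lia)) as [k [Hk Hm]]. destruct (Rle_dec (g (S n)) (g k)).
   + exists k. split; [lia|]. intros l Hl. destruct (Nat.eq_dec l (S n)). subst; auto. apply Hm; lia.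
   + exists (S n). split; [lia|]. intros l Hl. destruct (Nat.eq_dec l (S n)). subst; lra. assert (g l <= g k) by (apply Hm; lia). lra. Qed.


Lemma z_all_equal N T w0 x y z : 0 < T -> (1 <= N)%nat -> solves_rot N w0 0 T x y z ->
  (forall i, (i < N)%nat -> forall t, 0 <= t <= T -> z i t = z i 0) ->
  forall i l, (i < N)%nat -> (l < N)%nat -> forall t, 0 <= t <= T -> z i t = z l t.
Proof. intros HT HN [Hcf Hsol] Hz.
 set (t0 := T / 2). assert (Ht0 : 0 < t0 < T) by (unfold t0; lra).
 set (X := rotX w0 x y). set (Y := rotY w0 x y).
 assert (F0 : forall i, (i < N)%nat -> force N X Y z z i t0 = 0).
 { intros i Hi. destruct (Hsol i Hi) as (_ & _ & _ & VX & AX & VY & AY & VZ & AZ & H).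
   destruct (H t0 Ht0) as (_ & _ & _ & _ & h5 & h6 & _ & _ & e9).
   assert (V0 : forall s, 0 < s < T -> VZ s = 0).
   { intros s Hs. destruct (H s Hs) as (_ & _ & _ & _ & k5 & _). apply (const_deriv0 (z i) T s); auto. }
   assert (AZ t0 = 0).
   { apply (uniqueness_limite VZ t0); auto. apply (derivable_pt_lim_locally_ext (fun _ => 0) VZ t0 0 T); auto.
     intros s Hs; rewrite V0; auto. apply D_const. }
   unfold X, Y. rewrite <- e9. auto. }
 destruct (exists_max N (fun l => z l t0) ltac:(lia)) as [k [Hk Hm]].
 assert (Ek : forall l, (l < N)%nat -> z l t0 = z k t0).
 { intros l Hl. destruct (Nat.eq_dec l k) as [->|Hlk]; auto.
   assert (Hterm : forall l, (l < N)%nat -> 0 <= (if Nat.eqb l k then 0 else (z k t0 - z l t0) / dist3 X Y z k l t0 ^ 3)).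
   { intros m Hmm. destruct (Nat.eqb_spec m k). lra.
     assert (0 < dist3 X Y z k m t0). { apply dist3_pos. unfold X, Y. apply cf_pos_rot with N; auto. }
     unfold Rdiv. apply Rmult_le_pos. specialize (Hm m Hmm). simpl in Hm. lra. apply Rlt_le, Rinv_0_lt_compat, pow_lt; auto. }
   assert (Hs0 : sumN N (fun l => if Nat.eqb l k then 0 else (z k t0 - z l t0) / dist3 X Y z k l t0 ^ 3) = 0).
   { specialize (F0 k Hk). unfold force in F0. lra. }
   pose proof (sumN_zero_each N _ Hterm Hs0 l Hl) as Hl0. simpl in Hl0.
   destruct (Nat.eqb_spec l k); [lia|].
   assert (0 < dist3 X Y z k l t0). { apply dist3_pos. unfold X, Y. apply cf_pos_rot with N; auto. }
   assert (0 < dist3 X Y z k l t0 ^ 3) by (apply pow_lt; auto).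
   unfold Rdiv in Hl0. apply Rmult_integral in Hl0. destruct Hl0 as [Hl0|Hl0]. lra.
   exfalso. apply (Rinv_neq_0_compat (dist3 X Y z k l t0 ^ 3)); [apply Rgt_not_eq; lra | exact Hl0]. }
 intros i l Hi Hl t Ht. rewrite (Hz i Hi t Ht), (Hz l Hl t Ht).
 rewrite <- (Hz i Hi t0) by lra. rewrite <- (Hz l Hl t0) by lra. rewrite Ek, (Ek l); auto. Qed.

Lemma energy_const N T w0 x y z : 0 < T -> solves_rot N w0 0 T x y z ->
  (forall i, (i < N)%nat -> forall t, 0 <= t <= T -> z i t = z i 0) ->
  exists E0, forall t, 0 < t < T -> forall dx dy : nat -> R,
   (forall i, (i < N)%nat -> derivable_pt_lim (x i) t (dx i) /\ derivable_pt_lim (y i) t (dy i)) ->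
   U N x y z t = / 2 * sumN N (fun i => (dx i - w0 * y i t) ^ 2 + (dy i + w0 * x i t) ^ 2) - E0.
Proof. intros HT [Hcf Hsol] Hz.
 set (X := rotX w0 x y). set (Y := rotY w0 x y).
 destruct (@functional_choice nat ((R -> R) * ((R -> R) * ((R -> R) * ((R -> R) * ((R -> R) * (R -> R))))))
   (fun i p => let '(VX, (AX, (VY, (AY, (VZ, AZ))))) := p in (i < N)%nat -> forall t, 0 < t < T ->
      derivable_pt_lim (X i) t (VX t) /\ derivable_pt_lim VX t (AX t) /\
      derivable_pt_lim (Y i) t (VY t) /\ derivable_pt_lim VY t (AY t) /\
      derivable_pt_lim (z i) t (VZ t) /\ derivable_pt_lim VZ t (AZ t) /\
      AX t = force N X Y z X i t /\ AY t = force N X Y z Y i t /\ AZ t = force N X Y z z i t)) as [fam Hfam].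
 { intros i. destruct (Compare_dec.lt_dec i N) as [Hi|Hi].
   - destruct (Hsol i Hi) as (_ & _ & _ & VX & AX & VY & AY & VZ & AZ & H).
     exists (VX, (AX, (VY, (AY, (VZ, AZ))))). intros _. exact H.
   - exists ((fun _ => 0), ((fun _ => 0), ((fun _ => 0), ((fun _ => 0), ((fun _ => 0), (fun _ => 0)))))). intros; lia. }
 set (VX := fun i => fst (fam i)). set (AX := fun i => fst (snd (fam i))).
 set (VY := fun i => fst (snd (snd (fam i)))). set (AY := fun i => fst (snd (snd (snd (fam i))))).
 set (VZ := fun i => fst (snd (snd (snd (snd (fam i)))))). set (AZ := fun i => snd (snd (snd (snd (snd (fam i)))))).
 assert (Hf : forall i, (i < N)%nat -> forall t, 0 < t < T ->
      derivable_pt_lim (X i) t (VX i t) /\ derivable_pt_lim (VX i) t (AX i t) /\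
      derivable_pt_lim (Y i) t (VY i t) /\ derivable_pt_lim (VY i) t (AY i t) /\
      derivable_pt_lim (z i) t (VZ i t) /\ derivable_pt_lim (VZ i) t (AZ i t) /\
      AX i t = force N X Y z X i t /\ AY i t = force N X Y z Y i t /\ AZ i t = force N X Y z z i t).
 { intros i Hi t Ht. specialize (Hfam i). unfold VX, AX, VY, AY, VZ, AZ.
   destruct (fam i) as [a1 [a2 [a3 [a4 [a5 a6]]]]]. simpl. apply Hfam; auto. }
 set (E := fun s => /2 * sumN N (fun i => VX i s ^ 2 + VY i s ^ 2 + VZ i s ^ 2) - U N X Y z s).
 assert (DE : forall t, 0 < t < T -> derivable_pt_lim E t 0).
 { intros t Ht. apply (energy_deriv N X Y z VX VY VZ AX AY AZ t). intros i l Hi Hl Hil. unfold X, Y. apply cf_pos_rot with N; auto.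
   intros i Hi. apply Hf; auto. }
 assert (CE : forall t, 0 < t < T -> E t = E (T / 2)).
 { intros t Ht. destruct (Rtotal_order t (T / 2)) as [H|[H|H]].
   - destruct (MVT_cor2 E (fun _ => 0) t (T/2)) as [c [Hc _]]; auto. intros c Hc. apply DE; lra. lra.
   - rewrite H; auto.
   - destruct (MVT_cor2 E (fun _ => 0) (T/2) t) as [c [Hc _]]; auto. intros c Hc. apply DE; lra. lra. }
 exists (E (T / 2)). intros t Ht dx dy Hd.
 rewrite <- (CE t Ht). unfold E. rewrite <- (U_rot N w0 x y z t). fold X Y.
 assert (sumN N (fun i => VX i t ^ 2 + VY i t ^ 2 + VZ i t ^ 2) = sumN N (fun i => (dx i - w0 * y i t) ^ 2 + (dy i + w0 * x i t) ^ 2)).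
 { apply sumN_ext. intros i Hi. destruct (Hf i Hi t Ht) as (h1 & _ & h3 & _ & h5 & _). destruct (Hd i Hi) as [d1 d2].
   rewrite (uniqueness_limite _ _ _ _ h1 (D_rotX w0 x y i t _ _ d1 d2)).
   rewrite (uniqueness_limite _ _ _ _ h3 (D_rotY w0 x y i t _ _ d1 d2)).
   rewrite (const_deriv0 (z i) T t (VZ i t)); auto. rewrite rot_kin. ring. }
 rewrite H. ring. Qed.


Definition kinGe N (x y z : nat -> R -> R) (t c : R) : Prop :=
    forall dx dy dz : nat -> R,
    (forall i, (i < N)%nat -> derivable_pt_lim (x i) t (dx i) /\
        derivable_pt_lim (y i) t (dy i) /\ derivable_pt_lim (z i) t (dz i)) ->
    c <= sumN N (fun i => (dx i)^2 + (dy i)^2 + (dz i)^2).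

Lemma kin_nonneg N x y z t : kinGe N x y z t 0.
Proof. intros dx dy dz _. apply sumN_nonneg. intros. pose proof (pow2_ge_0 (dx i)). pose proof (pow2_ge_0 (dy i)). pose proof (pow2_ge_0 (dz i)). lra. Qed.

Lemma lub_nonneg T Ge v : 0 <= T -> (forall t, 0 < t < T -> Ge t 0) -> lower_integral_is 0 T Ge v -> 0 <= v.
Proof. intros HT H0 [Hub _]. assert (RiemannInt_SF (mkStepFun (StepFun_P4 0 T 0)) <= v).
 { apply Hub. exists (mkStepFun (StepFun_P4 0 T 0)). split; [|reflexivity]. intros t Ht. simpl. unfold fct_cte. apply H0; auto. }
 rewrite StepFun_P18 in H. lra. Qed.

Lemma C2_get T g : C2on 0 T g -> exists g1 : R -> R, forall t, 0 < t < T -> derivable_pt_lim g t (g1 t) /\ continuity_pt g1 t.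
Proof. intros [g1 [g2 H]]. exists g1. intros t Ht. destruct (H t Ht) as (h1 & h2 & _). split; auto.
 apply derivable_continuous_pt. exists (g2 t). auto. Qed.

Lemma rate_seg N T (x y z : nat -> R -> R) v i0 i1 (gx0 gx1 gy0 gy1 : R -> R) a b :
  (i0 < N)%nat -> (i1 < N)%nat -> i0 <> i1 ->
  lower_integral_is 0 T (kinGe N x y z) v ->
  (forall t, 0 < t < T -> derivable_pt_lim (x i0) t (gx0 t) /\ continuity_pt gx0 t) ->
  (forall t, 0 < t < T -> derivable_pt_lim (x i1) t (gx1 t) /\ continuity_pt gx1 t) ->
  (forall t, 0 < t < T -> derivable_pt_lim (y i0) t (gy0 t) /\ continuity_pt gy0 t) ->
  (forall t, 0 < t < T -> derivable_pt_lim (y i1) t (gy1 t) /\ continuity_pt gy1 t) ->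
  0 < a -> a < b -> b < T ->
  (x i0 b - x i1 b - (x i0 a - x i1 a)) ^ 2 + (y i0 b - y i1 b - (y i0 a - y i1 a)) ^ 2 <= 4 * v * (b - a).
Proof. intros Hi0 Hi1 Hne Hv Hx0 Hx1 Hy0 Hy1 Ha Hab Hb.
 assert (one : forall (G0 G1 g0 g1 : R -> R) (sel : (nat -> R) -> (nat -> R) -> (nat -> R) -> nat -> R),
   (forall t, 0 < t < T -> derivable_pt_lim G0 t (g0 t) /\ continuity_pt g0 t) ->
   (forall t, 0 < t < T -> derivable_pt_lim G1 t (g1 t) /\ continuity_pt g1 t) ->
   (forall t dx dy dz, 0 < t < T -> (forall i, (i < N)%nat -> derivable_pt_lim (x i) t (dx i) /\
        derivable_pt_lim (y i) t (dy i) /\ derivable_pt_lim (z i) t (dz i)) ->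
      sel dx dy dz i0 = g0 t /\ sel dx dy dz i1 = g1 t /\
      forall i, (i < N)%nat -> sel dx dy dz i ^ 2 <= dx i ^ 2 + dy i ^ 2 + dz i ^ 2) ->
   (G0 b - G1 b - (G0 a - G1 a)) ^ 2 <= 2 * v * (b - a)).
 { intros G0 G1 g0 g1 sel HG0 HG1 Hsel.
   set (g := fun t => g0 t - g1 t).
   assert (Cg : forall t, a <= t <= b -> continuity_pt g t).
   { intros t Ht. unfold g. apply (cont_ext (g0 - g1)%F). apply continuity_pt_minus; [apply HG0|apply HG1]; lra. intros; reflexivity. }
   assert (Cg2 : forall t, a <= t <= b -> continuity_pt (fun t => g t ^ 2) t).
   { intros t Ht. apply (cont_ext (g * g)%F). apply continuity_pt_mult; auto. intros; unfold mult_fct; simpl; ring. }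
   set (pr := continuity_implies_RiemannInt (Rlt_le _ _ Hab) Cg2).
   assert (C1 := cs_one (fun t => G0 t - G1 t) g a b pr Hab).
   assert (C2 : RiemannInt pr <= 2 * v).
   { apply (lower_link T a b v (kinGe N x y z)); auto; try lra.
     - intros; apply kin_nonneg.
     - intros t c Ht Ht' Hc dx dy dz Hd. destruct (Hsel t dx dy dz Ht' Hd) as (e0 & e1 & Hle).
       assert (dx i0 ^ 2 + dy i0 ^ 2 + dz i0 ^ 2 + (dx i1 ^ 2 + dy i1 ^ 2 + dz i1 ^ 2) <= sumN N (fun i => dx i ^ 2 + dy i ^ 2 + dz i ^ 2)).
       { apply (sumN_ge_two N (fun i => dx i ^ 2 + dy i ^ 2 + dz i ^ 2)); auto. intros.
         pose proof (pow2_ge_0 (dx i)). pose proof (pow2_ge_0 (dy i)). pose proof (pow2_ge_0 (dz i)). lra. }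
       pose proof (Hle i0 Hi0). pose proof (Hle i1 Hi1). rewrite e0 in *. rewrite e1 in *. unfold g in Hc.
       pose proof (pow2_ge_0 (g0 t + g1 t)). nra. }
   assert ((G0 b - G1 b - (G0 a - G1 a)) ^ 2 <= (b - a) * RiemannInt pr).
   { apply C1. intros t Ht. unfold g. apply D_minus; [apply HG0|apply HG1]; lra. auto. }
   nra. }
 assert (Ex := one (x i0) (x i1) gx0 gx1 (fun dx dy dz i => dx i) Hx0 Hx1).
 assert (Ey := one (y i0) (y i1) gy0 gy1 (fun dx dy dz i => dy i) Hy0 Hy1).
 assert (A : (x i0 b - x i1 b - (x i0 a - x i1 a)) ^ 2 <= 2 * v * (b - a)).
 { apply Ex. intros t dx dy dz Ht Hd. repeat split.
   - apply (uniqueness_limite (x i0) t). apply Hd; auto. apply Hx0; auto.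
   - apply (uniqueness_limite (x i1) t). apply Hd; auto. apply Hx1; auto.
   - intros. pose proof (pow2_ge_0 (dy i)). pose proof (pow2_ge_0 (dz i)). lra. }
 assert (B : (y i0 b - y i1 b - (y i0 a - y i1 a)) ^ 2 <= 2 * v * (b - a)).
 { apply Ey. intros t dx dy dz Ht Hd. repeat split.
   - apply (uniqueness_limite (y i0) t). apply Hd; auto. apply Hy0; auto.
   - apply (uniqueness_limite (y i1) t). apply Hd; auto. apply Hy1; auto.
   - intros. pose proof (pow2_ge_0 (dx i)). pose proof (pow2_ge_0 (dz i)). lra. }
 lra. Qed.

Lemma rate N T (x y z : nat -> R -> R) w0 i0 i1 :
  0 < T -> H1_path N T x y z -> solves_rot N w0 0 T x y z ->
  (i0 < N)%nat -> (i1 < N)%nat -> i0 <> i1 -> x i0 0 = x i1 0 -> y i0 0 = y i1 0 ->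
  exists K, 0 < K /\ forall eps, 0 < eps -> forall t, 0 < t < T -> t <= eps ^ 2 / K ->
    (x i0 t - x i1 t) ^ 2 + (y i0 t - y i1 t) ^ 2 <= eps ^ 2.
Proof. intros HT [Hc [v Hv]] [_ Hsol] Hi0 Hi1 Hne Ex Ey.
 fold (kinGe N x y z) in Hv.
 assert (v0 : 0 <= v) by (apply (lub_nonneg T (kinGe N x y z)); auto; try lra; intros; apply kin_nonneg).
 destruct (Hsol i0 Hi0) as (Cx0 & Cy0 & _). destruct (Hsol i1 Hi1) as (Cx1 & Cy1 & _).
 destruct (C2_get T _ Cx0) as [gx0 Hx0]. destruct (C2_get T _ Cx1) as [gx1 Hx1].
 destruct (C2_get T _ Cy0) as [gy0 Hy0]. destruct (C2_get T _ Cy1) as [gy1 Hy1].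
 exists (32 * v + 1). split; [lra|]. intros eps He t Ht Hte.
 assert (He8 : 0 < eps / 8) by lra.
 destruct (Hc i0 Hi0) as (cx0 & cy0 & _). destruct (Hc i1 Hi1) as (cx1 & cy1 & _).
 assert (H0T : 0 <= 0 <= T) by lra.
 destruct (cx0 0 H0T _ He8) as [d1 [Hd1 D1]]. destruct (cx1 0 H0T _ He8) as [d2 [Hd2 D2]].
 destruct (cy0 0 H0T _ He8) as [d3 [Hd3 D3]]. destruct (cy1 0 H0T _ He8) as [d4 [Hd4 D4]].
 set (a := Rmin (t / 2) (Rmin (Rmin d1 d2) (Rmin d3 d4)) / 2).
 assert (Ha : 0 < a < t).
 { unfold a. pose proof (Rmin_l (t / 2) (Rmin (Rmin d1 d2) (Rmin d3 d4))).
   assert (0 < Rmin (t / 2) (Rmin (Rmin d1 d2) (Rmin d3 d4))) by (repeat apply Rmin_pos; lra). lra. }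
 assert (Hsa : forall d, 0 < d -> (d = d1 \/ d = d2 \/ d = d3 \/ d = d4) -> Rabs (a - 0) < d).
 { intros d Hd Hdd. rewrite Rminus_0_r, Rabs_right by lra. unfold a.
   pose proof (Rmin_r (t / 2) (Rmin (Rmin d1 d2) (Rmin d3 d4))).
   pose proof (Rmin_l (Rmin d1 d2) (Rmin d3 d4)). pose proof (Rmin_r (Rmin d1 d2) (Rmin d3 d4)).
   pose proof (Rmin_l d1 d2). pose proof (Rmin_r d1 d2). pose proof (Rmin_l d3 d4). pose proof (Rmin_r d3 d4).
   assert (0 < Rmin (t / 2) (Rmin (Rmin d1 d2) (Rmin d3 d4))) by (repeat apply Rmin_pos; lra).
   destruct Hdd as [ -> | [ -> | [ -> | -> ] ] ]; lra. }
 assert (Ia : 0 <= a <= T) by lra.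
 pose proof (D1 a Ia (Hsa d1 Hd1 ltac:(auto))). pose proof (D2 a Ia (Hsa d2 Hd2 ltac:(auto))).
 pose proof (D3 a Ia (Hsa d3 Hd3 ltac:(auto))). pose proof (D4 a Ia (Hsa d4 Hd4 ltac:(auto))).
 apply Rabs_lt_between in H. apply Rabs_lt_between in H0. apply Rabs_lt_between in H1. apply Rabs_lt_between in H2.
 assert (S := rate_seg N T x y z v i0 i1 gx0 gx1 gy0 gy1 a t Hi0 Hi1 Hne Hv Hx0 Hx1 Hy0 Hy1 ltac:(lra) ltac:(lra) ltac:(lra)).
 set (u1 := x i0 t - x i1 t - (x i0 a - x i1 a)). set (u2 := y i0 t - y i1 t - (y i0 a - y i1 a)).
 set (a1 := x i0 a - x i1 a). set (a2 := y i0 a - y i1 a).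
 assert (Ba1 : a1 ^ 2 <= eps ^ 2 / 16) by (unfold a1; nra).
 assert (Ba2 : a2 ^ 2 <= eps ^ 2 / 16) by (unfold a2; nra).
 assert (Bt : 8 * v * t <= eps ^ 2 / 4).
 { assert (t * (32 * v + 1) <= eps ^ 2). { apply (Rmult_le_reg_r (/ (32 * v + 1))). apply Rinv_0_lt_compat; lra.
     rewrite Rmult_assoc, Rinv_r by lra. unfold Rdiv in Hte. lra. } nra. }
 replace (x i0 t - x i1 t) with (u1 + a1) by (unfold u1, a1; ring).
 replace (y i0 t - y i1 t) with (u2 + a2) by (unfold u2, a2; ring).
 assert ((u1 + a1) ^ 2 <= 2 * u1 ^ 2 + 2 * a1 ^ 2) by (pose proof (pow2_ge_0 (u1 - a1)); nra).
 assert ((u2 + a2) ^ 2 <= 2 * u2 ^ 2 + 2 * a2 ^ 2) by (pose proof (pow2_ge_0 (u2 - a2)); nra).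
 fold u1 u2 in S. nra. Qed.


Lemma inv_nonneg a : 0 <= a -> 0 <= 1 / a.
Proof. intros H. destruct (Req_dec a 0) as [->|Hn]. unfold Rdiv. rewrite Rinv_0. lra.
 unfold Rdiv. rewrite Rmult_1_l. apply Rlt_le, Rinv_0_lt_compat. lra. Qed.

Lemma U_nonneg N x y z t : 0 <= U N x y z t.
Proof. unfold U. apply sumN_nonneg; intros; apply sumN_nonneg; intros. apply inv_nonneg. unfold dist3. apply sqrt_pos. Qed.

Lemma Lag_nonneg N w x y z t : Lag_ge N w x y z t 0.
Proof. right. intros dx dy dz _. pose proof (U_nonneg N x y z t).
 assert (0 <= sumN N (fun i => (dx i - w * y i t) ^ 2 + (dy i + w * x i t) ^ 2 + dz i ^ 2)).
 { apply sumN_nonneg. intros. pose proof (pow2_ge_0 (dx i - w * y i t)). pose proof (pow2_ge_0 (dy i + w * x i t)). pose proof (pow2_ge_0 (dz i)). lra. }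
 lra. Qed.

Lemma dsum_ge N (Tm : nat -> nat -> R) j k : (forall i l, (l < i)%nat -> (i < N)%nat -> 0 <= Tm i l) ->
  (k < j)%nat -> (j < N)%nat -> Tm j k <= sumN N (fun i => sumN i (fun l => Tm i l)).
Proof. intros H Hkj HjN.
 assert (A1 : Tm j k <= sumN j (fun l => Tm j l)).
 { apply (sumN_ge_term j (fun l => Tm j l) k). intros; apply H; lia. auto. }
 assert (A2 : sumN j (fun l => Tm j l) <= sumN N (fun i => sumN i (fun l => Tm i l))).
 { apply (sumN_ge_term N (fun i => sumN i (fun l => Tm i l)) j). intros; apply sumN_nonneg; intros; apply H; lia. auto. }
 lra. Qed.

Lemma gain_pair A Bz eps : 0 < eps -> 0 < A -> A <= eps ^ 2 -> eps ^ 2 <= Bz ->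
  / (4 * eps) <= 1 / sqrt A - 1 / sqrt (A + Bz).
Proof. intros He HA HAe HB.
 set (r := sqrt A). set (p := sqrt (A + Bz)).
 assert (Hr : 0 < r) by (apply sqrt_lt_R0; auto).
 assert (Hr2 : r ^ 2 = A) by (unfold r; simpl; rewrite Rmult_1_r; apply sqrt_sqrt; lra).
 assert (Hp2 : p ^ 2 = A + Bz) by (unfold p; simpl; rewrite Rmult_1_r; apply sqrt_sqrt; lra).
 assert (Hp : 0 <= p) by (apply sqrt_pos).
 assert (Hre : r <= eps) by nra.
 assert (Hpr : 4 * r <= 3 * p) by nra.
 assert (Hp0 : 0 < p) by lra.
 fold r p.
 apply Rle_trans with (/ (4 * r)).
 - apply Rinv_le_contravar; lra.
 - replace (1 / r - 1 / p) with ((p - r) / (r * p)) by (field; lra).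
   apply (Rmult_le_reg_r (4 * r * p)). nra.
   replace (/ (4 * r) * (4 * r * p)) with p by (field; lra).
   replace ((p - r) / (r * p) * (4 * r * p)) with (4 * (p - r)) by (field; lra). lra. Qed.

Lemma tau_diff (a b : R) : (a = 0 \/ a = 1 \/ a = -1) -> (b = 0 \/ b = 1 \/ b = -1) -> a <> b -> 1 <= (a - b) ^ 2.
Proof. intros Ha Hb Hab. destruct Ha as [ -> | [ -> | -> ] ]; destruct Hb as [ -> | [ -> | -> ] ]; try lra; exfalso; apply Hab; auto. Qed.

Lemma tau_sq (a : R) : (a = 0 \/ a = 1 \/ a = -1) -> a ^ 2 <= 1.
Proof. intros [ -> | [ -> | -> ] ]; lra. Qed.


Lemma kin_split N w (x y : nat -> R -> R) (dx dy dz e : nat -> R) t :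
  (forall i, (i < N)%nat -> dz i = 0) ->
  / 2 * sumN N (fun i => (dx i - w * y i t) ^ 2 + (dy i + w * x i t) ^ 2 + (dz i + e i) ^ 2) <=
  sumN N (fun i => dx i ^ 2 + dy i ^ 2) + w ^ 2 * sumN N (fun i => x i t ^ 2 + y i t ^ 2) + / 2 * sumN N (fun i => e i ^ 2).
Proof. intros Hz. rewrite <- !sumN_scal, <- !sumN_plus. apply sumN_le. intros i Hi. rewrite Hz by auto.
 pose proof (pow2_ge_0 (dx i + w * y i t)). pose proof (pow2_ge_0 (dy i - w * x i t)). nra. Qed.

Lemma kin_rot_bound N w (x y : nat -> R -> R) (dx dy : nat -> R) t :
  / 2 * sumN N (fun i => (dx i - w * y i t) ^ 2 + (dy i + w * x i t) ^ 2) <=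
  sumN N (fun i => dx i ^ 2 + dy i ^ 2) + w ^ 2 * sumN N (fun i => x i t ^ 2 + y i t ^ 2).
Proof. rewrite <- !sumN_scal, <- !sumN_plus. apply sumN_le. intros i Hi.
 pose proof (pow2_ge_0 (dx i + w * y i t)). pose proof (pow2_ge_0 (dy i - w * x i t)). nra. Qed.

Lemma kin_le N (dx dy dz : nat -> R) : sumN N (fun i => dx i ^ 2 + dy i ^ 2) <= sumN N (fun i => dx i ^ 2 + dy i ^ 2 + dz i ^ 2).
Proof. apply sumN_le. intros. pose proof (pow2_ge_0 (dz i)). lra. Qed.

Lemma Lpert_eq N w (x y zo zp : nat -> R -> R) (dx dy dz e : nat -> R) t :
  (forall i, (i < N)%nat -> dz i = 0) ->
  / 2 * sumN N (fun i => (dx i - w * y i t) ^ 2 + (dy i + w * x i t) ^ 2 + (dz i + e i) ^ 2) + U N x y zp t =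
  (/ 2 * sumN N (fun i => (dx i - w * y i t) ^ 2 + (dy i + w * x i t) ^ 2 + dz i ^ 2) + U N x y zo t)
  + / 2 * sumN N (fun i => e i ^ 2) - (U N x y zo t - U N x y zp t).
Proof. intros Hz. rewrite (sumN_ext N (fun i => (dx i - w * y i t) ^ 2 + (dy i + w * x i t) ^ 2 + (dz i + e i) ^ 2)
   (fun i => ((dx i - w * y i t) ^ 2 + (dy i + w * x i t) ^ 2 + dz i ^ 2) + e i ^ 2)).
 rewrite sumN_plus. ring. intros i Hi. rewrite Hz by auto. ring. Qed.

Lemma action_part N T w (x y z zp e : nat -> R -> R) v B Cst c1 gam s1 s2 d1 d2 :
  0 < T -> 0 <= s1 -> s1 <= s2 -> s2 <= T -> 0 <= d1 -> d1 <= d2 -> d2 <= T -> 0 <= c1 -> 0 <= gam ->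
  lower_integral_is 0 T (kinGe N x y z) v ->
  (forall t, 0 < t < T -> collision_free N x y z t) ->
  (forall t, 0 < t < T -> collision_free N x y zp t) ->
  (forall t i d, 0 < t < T -> (i < N)%nat -> derivable_pt_lim (z i) t d -> d = 0) ->
  (forall t i d, 0 < t < T -> (i < N)%nat -> derivable_pt_lim (z i) t d -> derivable_pt_lim (zp i) t (d + e i t)) ->
  (forall t, 0 < t < T -> / 2 * sumN N (fun i => e i t ^ 2) <= c1 * chi d1 d2 t) ->
  (forall t, 0 < t < T -> U N x y zp t + gam * chi s1 s2 t <= U N x y z t) ->
  (forall t (dx dy : nat -> R), 0 < t < T -> (forall i, (i < N)%nat -> derivable_pt_lim (x i) t (dx i) /\ derivable_pt_lim (y i) t (dy i)) ->
      U N x y z t <= sumN N (fun i => dx i ^ 2 + dy i ^ 2) + Cst) ->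
  (forall t, 0 <= t <= T -> sumN N (fun i => x i t ^ 2 + y i t ^ 2) <= B) ->
  0 < gam * (s2 - s1) - c1 * (d2 - d1) ->
  action_lt N w T x y zp x y z.
Proof. intros HT Hs1 Hs12 Hs2 Hd1 Hd12 Hd2 Hc1 Hgam Hv Hcf Hcfp Hdz Hdzp He HU HE HB Hgain.
 destruct Hv as [Hvub _].
 assert (chi01 : forall a b t, 0 <= chi a b t <= 1) by (intros; unfold chi; destruct (Rle_dec a t); [destruct (Rle_dec t b)|]; lra).
 set (Cb := w ^ 2 * B + c1 + Cst).
 set (Sp := fun r => exists phi : StepFun 0 T, (forall t, 0 < t < T -> Lag_ge N w x y zp t (phi t)) /\ r = RiemannInt_SF phi).
 assert (Key : forall (phi : StepFun 0 T), (forall t, 0 < t < T -> Lag_ge N w x y zp t (phi t)) ->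
    forall t (dx dy dz : nat -> R), 0 < t < T -> (forall i, (i < N)%nat -> derivable_pt_lim (x i) t (dx i) /\
        derivable_pt_lim (y i) t (dy i) /\ derivable_pt_lim (z i) t (dz i)) ->
    (forall i, (i < N)%nat -> dz i = 0) /\
    phi t <= / 2 * sumN N (fun i => (dx i - w * y i t) ^ 2 + (dy i + w * x i t) ^ 2 + (dz i + e i t) ^ 2) + U N x y zp t).
 { intros phi Hphi t dx dy dz Ht Hd.
   assert (Hz0 : forall i, (i < N)%nat -> dz i = 0) by (intros i Hi; apply (Hdz t i); auto; apply Hd; auto).
   split; auto. destruct (Hphi t Ht) as [Hc|Hl]. { exfalso; apply Hc; auto. }
   apply (Hl dx dy (fun i => dz i + e i t)). intros i Hi. destruct (Hd i Hi) as (h1 & h2 & h3). repeat split; auto. }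
 assert (Bnd : forall r, Sp r -> r <= 2 * v + Cb * T).
 { intros r [phi [Hphi ->]].
   destruct (SF_lin 0 T phi (mkStepFun (StepFun_P4 0 T 1)) (/ 2) (- / 2 * Cb)) as [h [Hh Hhi]].
   assert (RiemannInt_SF h <= v).
   { apply Hvub. exists h. split; auto. intros t Ht dx dy dz Hd. rewrite Hh. cbn [fe]. unfold fct_cte.
     destruct (Key phi Hphi t dx dy dz Ht Hd) as [Hz0 Hp].
     pose proof (kin_split N w x y dx dy dz (fun i => e i t) t Hz0).
     assert (HE' := HE t dx dy Ht ltac:(intros i Hi; destruct (Hd i Hi) as (? & ? & ?); auto)).
     pose proof (HU t Ht). pose proof (He t Ht). pose proof (HB t ltac:(lra)). pose proof (chi01 s1 s2 t). pose proof (chi01 d1 d2 t).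
     pose proof (kin_le N dx dy dz).
     assert (0 <= w ^ 2) by apply pow2_ge_0.
     assert (w ^ 2 * sumN N (fun i => x i t ^ 2 + y i t ^ 2) <= w ^ 2 * B) by (apply Rmult_le_compat_l; auto).
     assert (0 <= gam * chi s1 s2 t) by (apply Rmult_le_pos; lra).
     assert (c1 * chi d1 d2 t <= c1) by (replace c1 with (c1 * 1) at 2 by ring; apply Rmult_le_compat_l; lra).
     cbv beta in H. unfold Cb. lra. }
   rewrite Hhi, StepFun_P18 in H. lra. }
 assert (Ne : Sp (RiemannInt_SF (mkStepFun (StepFun_P4 0 T 0)))).
 { exists (mkStepFun (StepFun_P4 0 T 0)). split; auto. intros t Ht. simpl. unfold fct_cte. apply Lag_nonneg. }
 destruct (completeness Sp) as [a Ha].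
 { exists (2 * v + Cb * T). intros r Hr. apply Bnd; auto. }
 { eexists; eauto. }
 exists a. split; [exact Ha|].
 intros b [Hbub _].
 set (delta := gam * (s2 - s1) - c1 * (d2 - d1)).
 assert (a <= b - delta). 2:{ unfold delta in H. lra. }
 apply (proj2 Ha). intros r [phi [Hphi ->]].
 destruct (SF_chi 0 T d1 d2) as [X1 [HX1 HX1i]]; auto.
 destruct (SF_chi 0 T s1 s2) as [X2 [HX2 HX2i]]; auto.
 destruct (SF_lin 0 T phi X1 1 (- c1)) as [h1 [Hh1 Hh1i]].
 destruct (SF_lin 0 T h1 X2 1 gam) as [h2 [Hh2 Hh2i]].
 assert (RiemannInt_SF h2 <= b).
 { apply Hbub. exists h2. split; auto. intros t Ht. right. intros dx dy dz Hd.
   rewrite Hh2, Hh1, HX1, HX2.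
   destruct (Key phi Hphi t dx dy dz Ht Hd) as [Hz0 Hp].
   rewrite (Lpert_eq N w x y z zp dx dy dz (fun i => e i t) t Hz0) in Hp.
   pose proof (He t Ht). pose proof (HU t Ht). lra. }
 rewrite Hh2i, Hh1i, HX1i, HX2i in H. unfold delta. lra. Qed.


Lemma sumN_one n : sumN n (fun _ => 1) = INR n.
Proof. induction n; simpl sumN; [simpl; lra|]. rewrite IHn, S_INR. ring. Qed.

Lemma U_diff N x y z zp t : U N x y z t - U N x y zp t =
  sumN N (fun i => sumN i (fun l => 1 / dist3 x y z i l t - 1 / dist3 x y zp i l t)).
Proof. unfold U. rewrite (sumN_ext N (fun i => sumN i (fun l => 1 / dist3 x y z i l t - 1 / dist3 x y zp i l t))
   (fun i => sumN i (fun l => 1 / dist3 x y z i l t) + - sumN i (fun l => 1 / dist3 x y zp i l t))).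
 rewrite sumN_plus, sumN_opp. ring.
 intros i Hi. unfold Rminus. rewrite sumN_plus, sumN_opp. reflexivity. Qed.

Lemma term_nonneg N x y z zp (h : nat -> R) t i l :
  (forall i l, (i < N)%nat -> (l < N)%nat -> z i t = z l t) -> (forall i, zp i t = z i t + h i) ->
  collision_free N x y z t -> (l < i)%nat -> (i < N)%nat ->
  0 <= 1 / dist3 x y z i l t - 1 / dist3 x y zp i l t.
Proof. intros Hz Hp Hcf Hli HiN.
 assert (P := cf_pos N x y z t i l Hcf HiN ltac:(lia) ltac:(lia)).
 assert (Hd : 0 < dist3 x y z i l t) by (apply dist3_pos; auto).
 assert (dist3 x y z i l t <= dist3 x y zp i l t).
 { unfold dist3. apply sqrt_le_1_alt. rewrite !Hp. rewrite (Hz i l) by lia.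
   replace (z l t - z l t) with 0 by ring. pose proof (pow2_ge_0 (z l t + h i - (z l t + h l))). lra. }
 assert (1 / dist3 x y zp i l t <= 1 / dist3 x y z i l t).
 { unfold Rdiv. rewrite !Rmult_1_l. apply Rinv_le_contravar; auto. }
 lra. Qed.

Lemma HU0 N x y z zp (h : nat -> R) t :
  (forall i l, (i < N)%nat -> (l < N)%nat -> z i t = z l t) -> (forall i, zp i t = z i t + h i) ->
  collision_free N x y z t -> U N x y zp t <= U N x y z t.
Proof. intros. assert (0 <= U N x y z t - U N x y zp t); [|lra]. rewrite U_diff.
 apply sumN_nonneg. intros i Hi. apply sumN_nonneg. intros l Hl. apply (term_nonneg N x y z zp h); auto. Qed.

Lemma HU1 N x y z zp (h : nat -> R) t j k eps :
  (forall i l, (i < N)%nat -> (l < N)%nat -> z i t = z l t) -> (forall i, zp i t = z i t + h i) ->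
  collision_free N x y z t -> (k < j)%nat -> (j < N)%nat -> 0 < eps ->
  (x j t - x k t) ^ 2 + (y j t - y k t) ^ 2 <= eps ^ 2 -> eps ^ 2 <= (h j - h k) ^ 2 ->
  U N x y zp t + / (4 * eps) <= U N x y z t.
Proof. intros Hz Hp Hcf Hkj HjN He HA HB. assert (/ (4 * eps) <= U N x y z t - U N x y zp t); [|lra].
 rewrite U_diff. apply Rle_trans with (1 / dist3 x y z j k t - 1 / dist3 x y zp j k t).
 - unfold dist3. rewrite !Hp. rewrite (Hz j k) by lia.
   replace (z k t - z k t) with 0 by ring. replace (z k t + h j - (z k t + h k)) with (h j - h k) by ring.
   replace ((x j t - x k t) ^ 2 + (y j t - y k t) ^ 2 + 0 ^ 2) with ((x j t - x k t) ^ 2 + (y j t - y k t) ^ 2) by ring.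
   apply gain_pair; auto.
   assert (P := cf_pos N x y z t j k Hcf HjN ltac:(lia) ltac:(lia)). rewrite (Hz j k) in P by lia.
   replace (z k t - z k t) with 0 in P by ring. lra.
 - apply (dsum_ge N (fun i l => 1 / dist3 x y z i l t - 1 / dist3 x y zp i l t)); auto.
   intros i l Hli HiN. apply (term_nonneg N x y z zp h); auto. Qed.


Theorem lemma3p3 (N : nat) (HN : (2 <= N)%nat) (T : R) (HT : 0 < T)
  (x y z : nat -> R -> R) (w0 : R) (I : nat -> Prop) (tau : nat -> R) :
  H1_path N T x y z ->
  solves_rot N w0 0 T x y z ->
  (forall i, I i -> (i < N)%nat) ->
  (exists i j, I i /\ I j /\ i <> j) ->
  cluster_collision N I x y z 0 ->
  (forall i, (i < N)%nat -> forall t, 0 <= t <= T -> z i t = z i 0) ->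
  (forall i, (i < N)%nat -> tau i = 0 \/ tau i = 1 \/ tau i = -1) ->
  (exists i0 i1, I i0 /\ I i1 /\ i0 <> i1 /\ tau i0 <> tau i1) ->
  (forall i, (i < N)%nat -> ~ I i -> tau i = 0) ->
  exists eps0, eps0 > 0 /\
  forall eps, 0 < eps < eps0 ->
  exists (d1 d2 : R) (f fd : R -> R),
    0 < d1 /\ d1 < d2 /\ d2 < T /\
    (* f in H^1([0,T]): continuous, C^1 off {d1,d2}, finite Dirichlet energy *)
    cont_on 0 T f /\
    (forall t, t <> d1 -> t <> d2 -> derivable_pt_lim f t (fd t) /\ continuity_pt fd t) /\
    (exists v, lower_integral_is 0 T (fun t c => c <= (fd t)^2) v) /\
    (forall t, 0 <= t <= d1 -> f t = 1) /\
    (forall t, d2 <= t <= T -> f t = 0) /\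
    (forall s t, d1 <= s -> s < t -> t <= d2 -> f t < f s) /\
    forall w : R,
      action_lt N w T x y (fun i t => z i t + eps * f t * tau i) x y z.
Proof.
 intros H1 Hsol HI _ Hcl Hz Htau Hdiff _.
 destruct Hdiff as [i0 [i1 [I0 [I1 [Hne Htd]]]]].
 assert (Hi0 := HI i0 I0). assert (Hi1 := HI i1 I1).
 destruct Hcl as [Hco _]. destruct (Hco i0 i1 I0 I1) as [Ex [Ey _]].
 assert (zeq := z_all_equal N T w0 x y z HT ltac:(lia) Hsol Hz).
 destruct (rate N T x y z w0 i0 i1 HT H1 Hsol Hi0 Hi1 Hne Ex Ey) as [K [HK Hrate]].
 destruct (energy_const N T w0 x y z HT Hsol Hz) as [E0 HE0].
 assert (Hcf := proj1 Hsol).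
 destruct H1 as [Hc [v Hv]]. fold (kinGe N x y z) in Hv.
 destruct (cont_bounded (fun s => sumN N (fun i => x i (clamp T s) ^ 2 + y i (clamp T s) ^ 2)) T) as [B HB0]; [lra| |].
 { intros t. apply (cont_sumN N (fun i s => x i (clamp T s) ^ 2 + y i (clamp T s) ^ 2)). intros i Hi.
   destruct (Hc i Hi) as (cx & cy & _).
   apply (cont_ext (((fun s => x i (clamp T s)) * (fun s => x i (clamp T s))) + ((fun s => y i (clamp T s)) * (fun s => y i (clamp T s))))%F).
   apply continuity_pt_plus; apply continuity_pt_mult; apply cont_on_clamp; auto; lra.
   intros s. unfold plus_fct, mult_fct. ring. }
 assert (HB : forall t, 0 <= t <= T -> sumN N (fun i => x i t ^ 2 + y i t ^ 2) <= B).
 { intros t Ht. specialize (HB0 t Ht). simpl in HB0. rewrite clamp_id in HB0 by auto. exact HB0. }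
 assert (HNpos : 0 < INR N) by (apply lt_0_INR; lia).
 set (eps0 := Rmin 1 (Rmin (K * T / 2) (T / (18 * INR N * K)))).
 assert (Heps0 : 0 < eps0).
 { unfold eps0. repeat apply Rmin_pos; try lra. apply Rdiv_lt_0_compat; nra. apply Rdiv_lt_0_compat; auto. nra. }
 exists eps0. split; [lra|]. intros eps [He He0].
 assert (He1 : eps < 1) by (pose proof (Rmin_l 1 (Rmin (K * T / 2) (T / (18 * INR N * K)))); unfold eps0 in He0; lra).
 assert (He2 : eps < K * T / 2).
 { pose proof (Rmin_r 1 (Rmin (K * T / 2) (T / (18 * INR N * K)))). pose proof (Rmin_l (K * T / 2) (T / (18 * INR N * K))). unfold eps0 in He0. lra. }
 assert (He3 : eps < T / (18 * INR N * K)).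
 { pose proof (Rmin_r 1 (Rmin (K * T / 2) (T / (18 * INR N * K)))). pose proof (Rmin_r (K * T / 2) (T / (18 * INR N * K))). unfold eps0 in He0. lra. }
 set (L := T / 2). assert (HL : 0 < L) by (unfold L; lra).
 set (d1 := eps ^ 2 / K).
 assert (Hd1 : 0 < d1) by (unfold d1; apply Rdiv_lt_0_compat; nra).
 assert (Hd1L : d1 < L).
 { unfold d1, L. apply (Rmult_lt_reg_r K); auto. unfold Rdiv. rewrite Rmult_assoc, Rinv_l by lra. nra. }
 exists d1, (d1 + L), (fcub d1 L), (fcubd d1 L).
 split; [auto|]. split; [lra|]. split; [unfold L in *; lra|].
 split. { apply (deriv_cont_on _ (fcubd d1 L)). intros t. apply fcub_deriv; auto. }
 split. { intros t H1t H2t. split. apply fcub_deriv; auto. apply fcubd_cont; auto. }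
 split.
 { destruct (completeness (fun r => exists phi : StepFun 0 T, (forall t, 0 < t < T -> phi t <= fcubd d1 L t ^ 2) /\ r = RiemannInt_SF phi)) as [m Hm].
   - exists (9 / (4 * L ^ 2) * T). intros r [phi [Hphi ->]].
     rewrite <- (Rminus_0_r T) at 2. rewrite <- (StepFun_P18 0 T (9 / (4 * L ^ 2))).
     apply StepFun_P37; [lra|]. intros t Ht. cbn [fe]. unfold fct_cte. eapply Rle_trans. apply Hphi; auto.
     eapply Rle_trans. apply fcubd_bound; auto. assert (0 <= 9 / (4 * L ^ 2)) by (apply Rlt_le, Rdiv_lt_0_compat; nra).
     unfold chi. destruct (Rle_dec d1 t); [destruct (Rle_dec t (d1 + L))|]; nra.
   - exists (RiemannInt_SF (mkStepFun (StepFun_P4 0 T 0))). exists (mkStepFun (StepFun_P4 0 T 0)). split; auto.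
     intros t Ht. simpl. unfold fct_cte. apply pow2_ge_0.
   - exists m. exact Hm. }
 split. { intros t Ht. apply fcub_one. lra. }
 split. { intros t Ht. apply fcub_zero; lra. }
 split. { intros s t Hs Hst Ht. apply fcub_decr; lra. }
 intros w.
 set (zp := fun i t => z i t + eps * fcub d1 L t * tau i).
 set (e := fun i t => eps * fcubd d1 L t * tau i).
 set (c1 := / 2 * eps ^ 2 * INR N * (9 / (4 * L ^ 2))).
 assert (HLT : L = T / 2) by reflexivity.
 apply (action_part N T w x y z zp e v B (w0 ^ 2 * B - E0) c1 (/ (4 * eps)) (d1 / 2) d1 d1 (d1 + L)).
 1-7: lra.
 - unfold c1. apply Rmult_le_pos. apply Rmult_le_pos. apply Rmult_le_pos. lra. apply pow2_ge_0. lra.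
   apply Rlt_le, Rdiv_lt_0_compat; nra.
 - apply Rlt_le, Rinv_0_lt_compat. lra.
 - exact Hv.
 - exact Hcf.
 -
   intros t Ht i l Hi Hl Hil [h1 [h2 h3]]. apply (Hcf t Ht i l Hi Hl Hil). split; auto. split; auto.
   apply zeq; auto. lra.
 - intros t i d Ht Hi Hd. apply (const_deriv0 (z i) T t); auto.
 - intros t i d Ht Hi Hd. unfold zp, e. apply D_plus; auto.
   apply (derivable_pt_lim_scal_right (fun s => eps * fcub d1 L s)). apply D_scal. apply fcub_deriv; auto.
 - intros t Ht. unfold e.
   assert (S1 : sumN N (fun i => (eps * fcubd d1 L t * tau i) ^ 2) <= eps ^ 2 * fcubd d1 L t ^ 2 * INR N).
   { rewrite <- sumN_one, <- sumN_scal. apply sumN_le. intros i Hi. pose proof (tau_sq (tau i) (Htau i Hi)).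
     assert (0 <= eps ^ 2 * fcubd d1 L t ^ 2) by (apply Rmult_le_pos; apply pow2_ge_0).
     replace ((eps * fcubd d1 L t * tau i) ^ 2) with (eps ^ 2 * fcubd d1 L t ^ 2 * tau i ^ 2) by ring. nra. }
   pose proof (fcubd_bound d1 L t HL). unfold c1.
   assert (0 <= eps ^ 2 * INR N) by (apply Rmult_le_pos; [apply pow2_ge_0|lra]).
   assert (eps ^ 2 * fcubd d1 L t ^ 2 * INR N <= eps ^ 2 * INR N * (9 / (4 * L ^ 2) * chi d1 (d1 + L) t)).
   { replace (eps ^ 2 * fcubd d1 L t ^ 2 * INR N) with (eps ^ 2 * INR N * fcubd d1 L t ^ 2) by ring.
     apply Rmult_le_compat_l; auto. }
   lra.
 - intros t Ht.
   assert (Hzp : forall i, zp i t = z i t + eps * fcub d1 L t * tau i) by (intros; reflexivity).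
   assert (Hzt : forall i l, (i < N)%nat -> (l < N)%nat -> z i t = z l t) by (intros; apply zeq; auto; lra).
   unfold chi. destruct (Rle_dec (d1 / 2) t); [destruct (Rle_dec t d1)|].
   + assert (Hf1 : fcub d1 L t = 1) by (apply fcub_one; auto).
     assert (A : (x i0 t - x i1 t) ^ 2 + (y i0 t - y i1 t) ^ 2 <= eps ^ 2) by (apply Hrate; auto; unfold d1 in *; lra).
     assert (Bz : eps ^ 2 <= (eps * fcub d1 L t * tau i0 - eps * fcub d1 L t * tau i1) ^ 2).
     { rewrite Hf1. replace ((eps * 1 * tau i0 - eps * 1 * tau i1) ^ 2) with (eps ^ 2 * (tau i0 - tau i1) ^ 2) by ring.
       pose proof (tau_diff (tau i0) (tau i1) (Htau i0 Hi0) (Htau i1 Hi1) Htd). assert (0 <= eps ^ 2) by apply pow2_ge_0. nra. }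
     rewrite Rmult_1_r. destruct (Nat.lt_ge_cases i1 i0).
     * apply (HU1 N x y z zp (fun i => eps * fcub d1 L t * tau i) t i0 i1 eps Hzt Hzp (Hcf t Ht) H Hi0 He A Bz).
     * assert (H' : (i0 < i1)%nat) by lia.
       apply (HU1 N x y z zp (fun i => eps * fcub d1 L t * tau i) t i1 i0 eps Hzt Hzp (Hcf t Ht) H' Hi1 He).
       replace ((x i1 t - x i0 t) ^ 2 + (y i1 t - y i0 t) ^ 2) with ((x i0 t - x i1 t) ^ 2 + (y i0 t - y i1 t) ^ 2) by ring. auto.
       replace ((eps * fcub d1 L t * tau i1 - eps * fcub d1 L t * tau i0) ^ 2) with ((eps * fcub d1 L t * tau i0 - eps * fcub d1 L t * tau i1) ^ 2) by ring. auto.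
   + rewrite Rmult_0_r, Rplus_0_r. apply (HU0 N x y z zp (fun i => eps * fcub d1 L t * tau i) t Hzt Hzp (Hcf t Ht)).
   + rewrite Rmult_0_r, Rplus_0_r. apply (HU0 N x y z zp (fun i => eps * fcub d1 L t * tau i) t Hzt Hzp (Hcf t Ht)).
 - intros t dx dy Ht Hd. rewrite (HE0 t Ht dx dy Hd).
   pose proof (kin_rot_bound N w0 x y dx dy t). pose proof (HB t ltac:(lra)).
   assert (w0 ^ 2 * sumN N (fun i => x i t ^ 2 + y i t ^ 2) <= w0 ^ 2 * B) by (apply Rmult_le_compat_l; auto; apply pow2_ge_0).
   lra.
 - exact HB.
 -
   unfold c1, d1, L. replace (eps ^ 2 / K + T / 2 - eps ^ 2 / K) with (T / 2) by ring.
   replace (/ (4 * eps) * (eps ^ 2 / K - eps ^ 2 / K / 2)) with (eps / (8 * K)) by (field; lra).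
   replace (/ 2 * eps ^ 2 * INR N * (9 / (4 * (T / 2) ^ 2)) * (T / 2)) with (9 * INR N * eps ^ 2 / (4 * T)) by (field; lra).
   assert (eps * (18 * INR N * K) < T).
   { apply (Rmult_lt_reg_r (/ (18 * INR N * K))). apply Rinv_0_lt_compat; nra.
     rewrite Rmult_assoc, Rinv_r by nra. unfold Rdiv in He3. lra. }
   assert (9 * INR N * eps ^ 2 / (4 * T) < eps / (8 * K)); [|lra].
   apply (Rmult_lt_reg_r (8 * K * T)). nra.
   replace (9 * INR N * eps ^ 2 / (4 * T) * (8 * K * T)) with (eps * (eps * (18 * INR N * K))) by (field; lra).
   replace (eps / (8 * K) * (8 * K * T)) with (eps * T) by (field; lra).
   apply Rmult_lt_compat_l; auto.
Qed.
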